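(* In the setting described in the context, suppose that the closed-loop system $\Sigma_0$ is UGES. Then there exists $\delta^\star>0$ such that the sampled-data system $\Sigma$ is UGES whenever the maximal sampling time $\delta=\sup_{k\ge0}(s_{k+1}-s_k)$ of the sampling sequence is smaller than $\delta^\star$.
   Context: $X,U$ are Banach spaces. $A$ is the infinitesimal generator of a $C_0$-group $(T_t)_{t\in\mathbb{R}}$ of bounded linear operators on $X$. $\mathcal{Q}$ is a nonempty set, $\mathrm{PC}$ the set of piecewise constant $\sigma:\mathbb{R}_+\to\mathcal{Q}$. For $q\in\mathcal{Q}$, $f_q:X\times U\to X$ is Lipschitz with constant $L_f>0$ independent of $q$ and $f_q(0,0)=0$; $K:X\to U$ is globally Lipschitz with $K(0)=0$. Closed-loop system $\Sigma_0$: for $q\in\mathcal{Q}$, $T_q(t)x_0$ is the mild solution $x(t)=T_tx_0+\int_0^tT_{t-s}f_q(x(s),K(x(s)))ds$, and for $\sigma\in\mathrm{PC}$ equal to $q_k$ on $[t_k,t_{k+1})$ ($0=t_0<t_1<\cdots\to\infty$), $\phi^{\Sigma_0}(t,x_0,\sigma)=T_{q_k}(t-t_k)\cdots T_{q_0}(t_1)x_0$ for $t\in[t_k,t_{k+1})$. Sampled-data system $\Sigma$: given sampling instants $s_0=0<s_1<\cdots$ with $s_k\to\infty$, $\phi^\Sigma(t,x_0,\sigma)=x^\Sigma(t)$, where $x^\Sigma$ is the unique continuous function with $x^\Sigma(0)=x_0$ and, for $k\ge0$, $s_k\le t<s_{k+1}$, $x^\Sigma(t)=T_{t-s_k}x^\Sigma(s_k)+\int_0^{t-s_k}T_{t-s_k-s}f_{\sigma(s+s_k)}(x^\Sigma(s+s_k),K(T_sx^\Sigma(s_k)))ds$.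 A system with transition map $\phi$ is UGES if there exist $M,\lambda>0$ with $\|\phi(t,x,\sigma)\|\le Me^{-\lambda t}\|x\|$ for all $t\ge0$, $x\in X$, $\sigma\in\mathrm{PC}$. *)

(* Defs.v *)
From Stdlib Require Import Reals.
From Coquelicot Require Import Coquelicot.
Open Scope R_scope.

Section Defs.
Context {X : NormedModule R_AbsRing}.

Definition bounded_linear (L : X -> X) : Prop :=
  (forall x y, L (plus x y) = plus (L x) (L y)) /\
  (forall (a : R) x, L (scal a x) = scal a (L x)) /\
  (exists C : R, forall x, norm (L x) <= C * norm x).

Definition C0_group (T : R -> X -> X) : Prop :=
  (forall t, bounded_linear (T t)) /\
  (forall x, T 0 x = x) /\
  (forall s t x, T (s + t) x = T s (T t x)) /\
  (forall x, filterlim (fun t => T t x) (locally 0) (locally x)).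

Definition continuous_on_Rplus (x : R -> X) : Prop :=
  forall t, 0 <= t -> filterlim x (within (fun u => 0 <= u) (locally t)) (locally (x t)).
End Defs.

Definition increasing_unbounded_from0 (ts : nat -> R) : Prop :=
  ts 0%nat = 0 /\ (forall k, ts k < ts (S k)) /\ (forall B, exists k, B < ts k).

Definition switching_seq {Q : Type} (sigma : R -> Q) (ts : nat -> R) : Prop :=
  increasing_unbounded_from0 ts /\
  (forall k t, ts k <= t < ts (S k) -> sigma t = sigma (ts k)).

Definition PC {Q : Type} (sigma : R -> Q) : Prop := exists ts, switching_seq sigma ts.

Definition sampling_seq (s : nat -> R) : Prop := increasing_unbounded_from0 s.

Definition globally_lipschitz {X U : NormedModule R_AbsRing} (K : X -> U) : Prop :=
  exists LK : R, forall x y, norm (minus (K x) (K y)) <= LK * norm (minus x y).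

(* x is the trajectory phi^{Sigma_0}(., x0, sigma) w.r.t. the switching
   sequence ts of sigma: on [t_k, t_{k+1}] it is the mild solution of mode
   q_k = sigma(t_k) started at x(t_k), i.e. x(t) = T_{q_k}(t - t_k) x(t_k). *)
Definition closed_loop_traj {X U : NormedModule R_AbsRing} {Q : Type}
  (T : R -> X -> X) (f : Q -> X -> U -> X) (K : X -> U)
  (sigma : R -> Q) (ts : nat -> R) (x0 : X) (x : R -> X) : Prop :=
  x 0 = x0 /\
  forall k t, ts k <= t <= ts (S k) ->
    exists I : X,
      is_RInt (fun r => T (t - ts k - r) (f (sigma (ts k)) (x (ts k + r)) (K (x (ts k + r)))))
              0 (t - ts k) I /\
      x t = plus (T (t - ts k) (x (ts k))) I.

Definition Sigma0_traj {X U : NormedModule R_AbsRing} {Q : Type}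
  (T : R -> X -> X) (f : Q -> X -> U -> X) (K : X -> U)
  (sigma : R -> Q) (x0 : X) (x : R -> X) : Prop :=
  exists ts, switching_seq sigma ts /\ closed_loop_traj T f K sigma ts x0 x.

Definition sampled_traj {X U : NormedModule R_AbsRing} {Q : Type}
  (T : R -> X -> X) (f : Q -> X -> U -> X) (K : X -> U) (s : nat -> R)
  (sigma : R -> Q) (x0 : X) (x : R -> X) : Prop :=
  x 0 = x0 /\ continuous_on_Rplus x /\
  forall k t, s k <= t < s (S k) ->
    exists I : X,
      is_RInt (fun r => T (t - s k - r) (f (sigma (r + s k)) (x (r + s k)) (K (T r (x (s k))))))
              0 (t - s k) I /\
      x t = plus (T (t - s k) (x (s k))) I.

Definition UGES {X : NormedModule R_AbsRing} {Q : Type}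
  (traj : (R -> Q) -> X -> (R -> X) -> Prop) : Prop :=
  exists M lam : R, 0 < M /\ 0 < lam /\
    forall (sigma : R -> Q) (x0 : X) (x : R -> X), PC sigma -> traj sigma x0 x ->
      forall t, 0 <= t -> norm (x t) <= M * exp (- lam * t) * norm x0.

(* Main.v *)
Require Import Defs.
From Stdlib Require Import Reals Lra Lia Classical ClassicalEpsilon ZArith.
From Coquelicot Require Import Coquelicot.
Open Scope R_scope.

Section BL.
Context {X : NormedModule R_AbsRing}.

Lemma BL_opp (L : X -> X) : bounded_linear L -> forall x, L (opp x) = opp (L x).
Proof.
  intros [Ha [Hs _]] x.
  assert (E: forall y : X, opp y = scal (opp (one:R_AbsRing)) y) by (intros; symmetry; exact (@scal_opp_one _ (NormedModule.ModuleSpace R_AbsRing X) y)).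
  rewrite !E. apply Hs.
Qed.

Lemma BL_minus (L : X -> X) : bounded_linear L -> forall x y, L (minus x y) = minus (L x) (L y).
Proof.
  intros HL x y. unfold minus. destruct HL as [Ha Hs]. rewrite Ha. f_equal. apply BL_opp. split; auto.
Qed.

Lemma BL_zero (L : X -> X) : bounded_linear L -> L zero = zero.
Proof.
  intros HL. destruct HL as [_ [Hs _]].
  assert (E: forall y : X, scal (0:R) y = zero) by (intros; exact (@scal_zero_l _ (NormedModule.ModuleSpace R_AbsRing X) y)).
  rewrite <- (E zero) at 1. rewrite Hs. apply E.
Qed.

Lemma BL_bound (L : X -> X) : bounded_linear L -> exists C, 0 < C /\ forall x, norm (L x) <= C * norm x.
Proof.
  intros [_ [_ [C HC]]]. exists (Rmax C 1). split. generalize (Rmax_r C 1); lra.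
  intros x. eapply Rle_trans. apply HC. apply Rmult_le_compat_r. apply norm_ge_0. apply Rmax_l.
Qed.

Lemma Riemann_sum_BL (L : X -> X) (g : R -> X) ptd : bounded_linear L ->
  Riemann_sum (fun r => L (g r)) ptd = L (Riemann_sum g ptd).
Proof.
  intros HL. induction ptd using SF_cons_ind.
  - unfold Riemann_sum; simpl. symmetry; apply BL_zero; auto.
  - rewrite !Riemann_sum_cons. rewrite IHptd. destruct HL as [Ha [Hs _]].
    rewrite Ha. rewrite Hs. reflexivity.
Qed.

Lemma BL_cont (L : X -> X) : bounded_linear L -> forall x, filterlim L (locally x) (locally (L x)).
Proof.
  intros HL x. destruct (BL_bound L HL) as [C [HC HCb]].
  apply (proj2 (filterlim_locally_ball_norm _ _)). intros eps.
  assert (He : 0 < eps / C) by (apply Rdiv_lt_0_compat; [apply cond_pos|auto]).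
  apply (filter_imp (ball_norm x (mkposreal _ He))). 2: apply locally_ball_norm.
  intros y Hy. unfold ball_norm in *. simpl in Hy. rewrite <- BL_minus by auto.
  eapply Rle_lt_trans. apply HCb. 
  replace (pos eps) with (C * (eps / C)) by (field; lra). apply Rmult_lt_compat_l; auto.
Qed.

Lemma is_RInt_BL (L : X -> X) (g : R -> X) a b I : bounded_linear L ->
  is_RInt g a b I -> is_RInt (fun r => L (g r)) a b (L I).
Proof.
  intros HL Hg. unfold is_RInt in *.
  eapply filterlim_ext. 2: eapply filterlim_comp. 2: exact Hg. 2: apply BL_cont; auto.
  intros ptd. simpl. rewrite Riemann_sum_BL by auto. destruct HL as [_ [Hs _]]. rewrite Hs. reflexivity.
Qed.
End BL.

Section G. Context {G : AbelianGroup}.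
Lemma minus_plus_l (c w : G) : minus (plus c w) c = w.
Proof. unfold minus. rewrite (plus_comm c w). rewrite <- plus_assoc. change (plus w (plus c (opp c)) = w). rewrite plus_opp_r. apply plus_zero_r. Qed.
Lemma minus_diag (c : G) : minus c c = zero.
Proof. apply minus_eq_zero. Qed.
Lemma plus_minus_r (a b : G) : plus a (minus b a) = b.
Proof. rewrite plus_comm. unfold minus. rewrite <- plus_assoc. change (plus b (plus (opp a) a) = b). rewrite plus_opp_l. apply plus_zero_r. Qed.
Lemma minus_minus_r (a b c : G) : minus (minus a c) (minus b c) = minus a b.
Proof. change (plus (minus a c) (opp (minus b c)) = minus a b). rewrite opp_minus. symmetry. apply minus_trans. Qed.
Lemma minus_pp (a b c d : G) : minus (plus a b) (plus c d) = plus (minus a c) (minus b d).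
Proof. unfold minus. rewrite opp_plus. rewrite <- !plus_assoc. f_equal. rewrite plus_comm. rewrite <- plus_assoc. f_equal. apply plus_comm. Qed.
Lemma minus_zero_eq (a b : G) : minus a b = zero -> a = b.
Proof. intros H. rewrite <- (plus_minus_r b a). rewrite H. apply plus_zero_r. Qed.
Lemma minus_plus_cancel (c u v : G) : minus (plus c u) (plus c v) = minus u v.
Proof. rewrite minus_pp. rewrite minus_eq_zero. apply plus_zero_l. Qed.
Lemma plus_minus_assoc (a b c : G) : plus (minus a c) b = minus (plus a b) c.
Proof. unfold minus. rewrite <- !plus_assoc. f_equal. apply plus_comm. Qed.
Lemma plus_opp_minus (a b : G) : plus (opp a) b = minus b a.
Proof. unfold minus. apply plus_comm. Qed.
Lemma plus_minus_chain (a b c : G) : plus (minus b a) (minus c b) = minus c a.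
Proof. rewrite plus_comm. symmetry. apply minus_trans. Qed.
Lemma plus_opp_minus2 (a b c : G) : plus (opp (minus b a)) (minus c a) = minus c b.
Proof. rewrite opp_minus. apply plus_minus_chain. Qed.
End G.

Section NM.
Context {X : NormedModule R_AbsRing}.
Lemma nzX : norm (zero : X) = 0.
Proof. exact (@norm_zero _ X). Qed.
Lemma nmdX (c : X) : norm (minus c c) = 0.
Proof. rewrite minus_eq_zero. apply norm_zero. Qed.
Lemma mppX (a b c d : X) : minus (plus a b) (plus c d) = plus (minus a c) (minus b d).
Proof. exact (@minus_pp (NormedModule.AbelianGroup _ X) a b c d). Qed.
Lemma mzeX (a b : X) : minus a b = zero -> a = b.
Proof. exact (@minus_zero_eq (NormedModule.AbelianGroup _ X) a b). Qed.
Lemma mpcX (c u v : X) : minus (plus c u) (plus c v) = minus u v.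
Proof. exact (@minus_plus_cancel (NormedModule.AbelianGroup _ X) c u v). Qed.
Lemma mz0X (a : X) : minus a zero = a.
Proof. exact (@minus_zero_r (NormedModule.AbelianGroup _ X) a). Qed.
Lemma mz0X' (a : X) : minus a (@zero (NormedModule.AbelianMonoid R_AbsRing X)) = a.
Proof. exact (@minus_zero_r (NormedModule.AbelianGroup _ X) a). Qed.
Lemma s1X (a : X) : scal 1 a = a.
Proof. exact (@scal_one _ (NormedModule.ModuleSpace R_AbsRing X) a). Qed.
Lemma pz0X (a : X) : plus a zero = a.
Proof. exact (@plus_zero_r (NormedModule.AbelianMonoid _ X) a). Qed.
Lemma pmaX (a b c : X) : plus (minus a c) b = minus (plus a b) c.
Proof. exact (@plus_minus_assoc (NormedModule.AbelianGroup _ X) a b c). Qed.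
Lemma pomX (a b : X) : plus (opp a) b = minus b a.
Proof. exact (@plus_opp_minus (NormedModule.AbelianGroup _ X) a b). Qed.
Lemma pmcX (a b c : X) : plus (minus b a) (minus c b) = minus c a.
Proof. exact (@plus_minus_chain (NormedModule.AbelianGroup _ X) a b c). Qed.
Lemma pom2X (a b c : X) : plus (opp (minus b a)) (minus c a) = minus c b.
Proof. exact (@plus_opp_minus2 (NormedModule.AbelianGroup _ X) a b c). Qed.
Lemma mplX (c w : X) : minus (plus c w) c = w.
Proof. exact (@minus_plus_l (NormedModule.AbelianGroup _ X) c w). Qed.
Lemma mdX (c : X) : minus c c = zero.
Proof. exact (@minus_diag (NormedModule.AbelianGroup _ X) c). Qed.
Lemma pmrX (a b : X) : plus a (minus b a) = b.
Proof. exact (@plus_minus_r (NormedModule.AbelianGroup _ X) a b). Qed.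
Lemma mmrX (a b c : X) : minus (minus a c) (minus b c) = minus a b.
Proof. exact (@minus_minus_r (NormedModule.AbelianGroup _ X) a b c). Qed.
Lemma minus_tri (a b c : X) : minus a c = plus (minus a b) (minus b c).
Proof.
  unfold minus. rewrite <- plus_assoc. f_equal. rewrite plus_assoc. rewrite plus_opp_l. rewrite plus_zero_l. auto.
Qed.
Lemma norm_minus_tri (a b c : X) : norm (minus a c) <= norm (minus a b) + norm (minus b c).
Proof. rewrite (minus_tri a b c). apply norm_triangle. Qed.
Lemma norm_minus_sym (a b : X) : norm (minus a b) = norm (minus b a).
Proof. rewrite <- opp_minus. apply norm_opp. Qed.
Lemma norm_minus_le (a b : X) : norm (minus a b) <= norm a + norm b.
Proof. unfold minus. eapply Rle_trans. apply norm_triangle. rewrite norm_opp. lra. Qed.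
Lemma norm_ge_minus (a b : X) : norm a - norm b <= norm (minus a b).
Proof. generalize (norm_triangle_inv a b). intros H. generalize (Rle_abs (norm a - norm b)). lra. Qed.
Lemma norm_scal_eq (l : R) (x : X) : norm (scal l x) = Rabs l * norm x.
Proof.
  apply Rle_antisym. exact (norm_scal l x).
  destruct (Req_dec l 0) as [->|Hl].
  - rewrite Rabs_R0. rewrite Rmult_0_l. apply norm_ge_0.
  - assert (E: x = scal (/l) (scal l x)).
    { rewrite scal_assoc. replace (mult (/l) l) with 1. symmetry. exact (@scal_one _ (NormedModule.ModuleSpace R_AbsRing X) x).
      unfold mult; simpl. field. auto. }
    assert (H: norm x <= Rabs (/l) * norm (scal l x)).
    { rewrite E at 1. exact (norm_scal (/l) (scal l x)). }
    rewrite Rabs_inv in H.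
    assert (0 < Rabs l) by (apply Rabs_pos_lt; auto).
    apply (Rmult_le_compat_l (Rabs l)) in H. 2: lra.
    rewrite <- Rmult_assoc, Rinv_r, Rmult_1_l in H; lra.
Qed.
End NM.

Section UBP.
Context {X : NormedModule R_AbsRing}.

Lemma UBP_step (A : nat -> X -> X) : (forall n, bounded_linear (A n)) ->
  ~ (exists C, forall n x, norm (A n x) <= C * norm x) ->
  forall (c : X) (r m : R), exists p : X * R, 0 < r ->
    0 < snd p /\ snd p <= r / 4 /\ norm (minus (fst p) c) <= r / 2 /\
    forall z, norm (minus z (fst p)) <= snd p -> exists n, m < norm (A n z).
Proof.
  intros HA HC c r m.
  destruct (Rlt_or_le 0 r) as [Hr|Hr]. 2: { exists (c, r). intros; lra. }
  set (C := 4 * (Rabs m + 1) / r).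
  assert (HCp : 0 < C) by (unfold C; apply Rdiv_lt_0_compat; [generalize (Rabs_pos m); lra|auto]).
  destruct (classic (exists n x, C * norm x < norm (A n x))) as [[n [x Hx]]|Hno].
  2: { exfalso. apply HC. exists C. intros n x. apply Rnot_lt_le. intros H. apply Hno. eauto. }
  assert (Hnx : 0 < norm x).
  { destruct (norm_ge_0 x) as [H|H]; auto. exfalso. symmetry in H. apply norm_eq_zero in H. subst x.
    rewrite (BL_zero (A n) (HA n)) in Hx. rewrite nzX in Hx. lra. }
  assert (Fin : forall x', norm (minus x' c) <= r / 2 -> Rabs m + 1 < norm (A n x') ->
     exists p : X * R, 0 < r ->
    0 < snd p /\ snd p <= r / 4 /\ norm (minus (fst p) c) <= r / 2 /\
    forall z, norm (minus z (fst p)) <= snd p -> exists n, m < norm (A n z)).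
  { intros x' H1 H2. destruct (BL_bound (A n) (HA n)) as [Cn [HCn HCnb]].
    exists (x', Rmin (r/4) (1/Cn)). intros _. simpl. split; [|split; [|split]].
    - apply Rmin_pos. lra. apply Rdiv_lt_0_compat; lra.
    - apply Rmin_l.
    - auto.
    - intros z Hz. exists n. 
      assert (H3 : norm (minus (A n x') (A n z)) <= 1).
      { rewrite <- BL_minus by auto. eapply Rle_trans. apply HCnb.
        rewrite norm_minus_sym. 
        apply Rle_trans with (Cn * (1/Cn)). apply Rmult_le_compat_l. lra. eapply Rle_trans. apply Hz. apply Rmin_r.
        right; field; lra. }
      generalize (norm_ge_minus (A n x') (A n z)). generalize (Rle_abs m). lra. }
  set (l := r / (2 * norm x)).
  assert (Hl : 0 < l) by (unfold l; apply Rdiv_lt_0_compat; lra).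
  set (w := scal l x).
  assert (Hw : norm w = r / 2).
  { unfold w. rewrite norm_scal_eq. rewrite (Rabs_pos_eq l) by lra. unfold l. field. lra. }
  assert (HAw : 2 * (Rabs m + 1) < norm (A n w)).
  { unfold w. destruct (HA n) as [_ [Hs _]]. rewrite Hs. rewrite norm_scal_eq. rewrite (Rabs_pos_eq l) by lra.
    apply Rle_lt_trans with (l * (C * norm x)). 2: apply Rmult_lt_compat_l; lra.
    apply Req_le. unfold l, C. field. split; lra. }
  assert (Ew : A n w = minus (A n (plus c w)) (A n c)).
  { rewrite <- BL_minus by auto. f_equal. symmetry. apply mplX. }
  assert (Htri := norm_minus_le (A n (plus c w)) (A n c)). rewrite <- Ew in Htri.
  destruct (Rlt_or_le (Rabs m + 1) (norm (A n c))) as [Hc|Hc].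
  - apply (Fin c); auto. rewrite nmdX. lra.
  - apply (Fin (plus c w)). 2: lra. replace (minus (plus c w) c) with w. lra.
    symmetry. apply mplX.
Qed.
End UBP.

Lemma nat_larger (y : R) : exists k : nat, y < INR k.
Proof.
  destruct (archimed y) as [H1 _]. exists (Z.to_nat (up y)).
  destruct (Z_lt_le_dec (up y) 0) as [Hn|Hp].
  - assert (IZR (up y) < 0) by (apply IZR_lt; auto). generalize (pos_INR (Z.to_nat (up y))). lra.
  - rewrite INR_IZR_INZ. rewrite Z2Nat.id by auto. auto.
Qed.

Lemma inv_small (eps : R) : 0 < eps -> exists N : nat, 1 / (INR N + 1) < eps.
Proof.
  intros He. destruct (nat_larger (1/eps)) as [N HN]. exists N.
  generalize (pos_INR N); intros HN0.
  apply Rmult_lt_reg_r with (INR N + 1). lra. unfold Rdiv. rewrite Rmult_1_l, Rinv_l by lra.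
  apply Rmult_lt_reg_l with (/eps). apply Rinv_0_lt_compat; auto.
  rewrite <- Rmult_assoc, Rinv_l, Rmult_1_r, Rmult_1_l by lra. unfold Rdiv in HN. lra.
Qed.

Definition ncomplete (X : NormedModule R_AbsRing) := forall u : nat -> X,
  (forall eps, 0 < eps -> exists N, forall n m, (N <= n)%nat -> (N <= m)%nat -> norm (minus (u n) (u m)) < eps) ->
  exists l, forall eps, 0 < eps -> exists N, forall n, (N <= n)%nat -> norm (minus (u n) l) < eps.

Section UBP2.
Context {X : NormedModule R_AbsRing}.
Lemma UBP (A : nat -> X -> X) : ncomplete X -> (forall n, bounded_linear (A n)) ->
  (forall x, exists B, forall n, norm (A n x) <= B) ->
  exists C, forall n x, norm (A n x) <= C * norm x.
Proof.
  intros Hcomp HA Hpt. apply NNPP. intros HC.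
  assert (Hf : exists F : X -> R -> R -> X * R, forall c r m, 0 < r ->
    0 < snd (F c r m) /\ snd (F c r m) <= r / 4 /\ norm (minus (fst (F c r m)) c) <= r / 2 /\
    forall z, norm (minus z (fst (F c r m))) <= snd (F c r m) -> exists n, m < norm (A n z)).
  { exists (fun c r m => proj1_sig (constructive_indefinite_description _ (UBP_step A HA HC c r m))).
    intros c r m Hr. apply (proj2_sig (constructive_indefinite_description _ (UBP_step A HA HC c r m))). auto. }
  destruct Hf as [F HF].
  pose (sq := fix sq (k : nat) : X * R := match k with O => (zero, 1) | S k' => F (fst (sq k')) (snd (sq k')) (INR k') end).
  set (c := fun k => fst (sq k)). set (r := fun k => snd (sq k)).
  assert (Hpos : forall k, 0 < r k).
  { induction k. unfold r; simpl; lra. unfold r; simpl. apply HF. apply IHk. }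
  assert (Hst : forall k, r (S k) <= r k / 4 /\ norm (minus (c (S k)) (c k)) <= r k / 2 /\
     forall z, norm (minus z (c (S k))) <= r (S k) -> exists n, INR k < norm (A n z)).
  { intros k. destruct (HF (c k) (r k) (INR k) (Hpos k)) as [_ [H1 [H2 H3]]]. split; [|split]; auto. }
  assert (Hsmall : forall k, r k <= 1 / (INR k + 1)).
  { induction k. unfold r; simpl; lra. destruct (Hst k) as [H1 _]. rewrite S_INR.
    generalize (pos_INR k); intros Hk.
    apply Rle_trans with (r k / 4). auto. apply Rle_trans with (/ (4 * (INR k + 1))).
    replace (/ (4 * (INR k + 1))) with (1 / (INR k + 1) / 4) by (field; lra). lra.
    unfold Rdiv. rewrite Rmult_1_l. apply Rinv_le_contravar; lra. }
  assert (Hdist : forall k d, norm (minus (c (k + d)%nat) (c k)) <= 2/3 * (r k - r (k + d)%nat)).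
  { intros k d. induction d.
    - rewrite Nat.add_0_r. rewrite nmdX. lra.
    - replace (k + S d)%nat with (S (k + d)) by lia. destruct (Hst (k + d)%nat) as [H1 [H2 _]].
      eapply Rle_trans. apply (norm_minus_tri _ (c (k + d)%nat)). lra. }
  assert (Hd : forall k j, (k <= j)%nat -> norm (minus (c j) (c k)) <= 2/3 * r k).
  { intros k j Hkj. replace j with (k + (j - k))%nat by lia. eapply Rle_trans. apply Hdist.
    generalize (Hpos (k + (j - k))%nat). lra. }
  destruct (Hcomp c) as [l Hl].
  { intros eps He. destruct (inv_small (eps / 2)) as [N HN]. lra. exists N. intros n m Hn Hm.
    eapply Rle_lt_trans. apply (norm_minus_tri _ (c N)). rewrite (norm_minus_sym (c N)).
    generalize (Hd N n Hn) (Hd N m Hm) (Hsmall N). lra. }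
  assert (Hin : forall k, norm (minus l (c (S k))) <= r (S k)).
  { intros k. destruct (Hl (r (S k) / 3)) as [N HN]. generalize (Hpos (S k)); lra.
    set (j := Nat.max (S k) N). eapply Rle_trans. apply (norm_minus_tri _ (c j)).
    rewrite (norm_minus_sym l). generalize (HN j (Nat.le_max_r _ _)) (Hd (S k) j (Nat.le_max_l _ _)). lra. }
  destruct (Hpt l) as [B HB]. destruct (nat_larger B) as [k Hk].
  destruct (Hst k) as [_ [_ H3]]. destruct (H3 l (Hin k)) as [n Hn]. generalize (HB n). lra.
Qed.
End UBP2.

Lemma locally_R (a:R) (P : R -> Prop) : locally a P -> exists d, 0 < d /\ forall y, Rabs (y - a) < d -> P y.
Proof. intros [d Hd]. exists d. split. apply cond_pos. intros y Hy. apply Hd. exact Hy. Qed.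
Lemma locally_R_intro (a:R) (P : R -> Prop) d : 0 < d -> (forall y, Rabs (y - a) < d -> P y) -> locally a P.
Proof. intros Hd H. exists (mkposreal d Hd). intros y Hy. apply H. exact Hy. Qed.

Lemma sum_f_R0_ge (f : nat -> R) N i : (forall k, 0 <= f k) -> (i <= N)%nat -> f i <= sum_f_R0 f N.
Proof.
  intros Hf Hi. induction N.
  - replace i with 0%nat by lia. simpl. lra.
  - simpl. destruct (Nat.eq_dec i (S N)) as [->|Hne]. generalize (cond_pos_sum f N Hf). lra.
    assert (i <= N)%nat by lia. generalize (IHN H) (Hf (S N)). lra.
Qed.

Section NC.
Context {X : NormedModule R_AbsRing}.
Definition ncont (f : R -> X) (a : R) := forall eps, 0 < eps -> exists d, 0 < d /\
  forall y, Rabs (y - a) < d -> norm (minus (f y) (f a)) < eps.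
Definition rcont (f : R -> R) (a : R) := forall eps, 0 < eps -> exists d, 0 < d /\
  forall y, Rabs (y - a) < d -> Rabs (f y - f a) < eps.

Lemma ncont_continuous f a : ncont f a -> filterlim f (locally a) (locally (f a)).
Proof.
  intros H. apply (proj2 (filterlim_locally_ball_norm _ _)). intros eps.
  destruct (H eps (cond_pos eps)) as [d [Hd Hd']]. apply (locally_R_intro a _ d Hd).
  intros y Hy. apply Hd'. auto.
Qed.
End NC.

Section Grp.
Context {X : NormedModule R_AbsRing} (T : R -> X -> X) (HT : C0_group T).

Lemma T_BL t : bounded_linear (T t).
Proof. apply HT. Qed.
Lemma T_0 x : T 0 x = x.
Proof. apply HT. Qed.
Lemma T_add s t x : T (s + t) x = T s (T t x).
Proof. apply HT. Qed.
Lemma T_inv t x : T t (T (- t) x) = x.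
Proof. rewrite <- T_add. replace (t + - t) with 0 by ring. apply T_0. Qed.
Lemma T_inv' t x : T (- t) (T t x) = x.
Proof. rewrite <- T_add. replace (- t + t) with 0 by ring. apply T_0. Qed.
Lemma T_minus t x y : T t (minus x y) = minus (T t x) (T t y).
Proof. apply BL_minus. apply T_BL. Qed.

Lemma T_cont0 x eps : 0 < eps -> exists d, 0 < d /\ forall t, Rabs t < d -> norm (minus (T t x) x) < eps.
Proof.
  intros He. destruct HT as [_ [_ [_ Hc]]]. specialize (Hc x).
  apply filterlim_locally_ball_norm with (eps := mkposreal eps He) in Hc.
  destruct (locally_R _ _ Hc) as [d [Hd Hd']]. exists d. split; auto.
  intros t Ht. apply (Hd' t). rewrite Rminus_0_r. auto.
Qed.

Lemma T_local_bound0 : ncomplete X -> exists eta M, 0 < eta /\ forall t, Rabs t <= eta -> forall x, norm (T t x) <= M * norm x.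
Proof.
  intros Hcomp. apply NNPP. intros H.
  assert (Hn : forall n : nat, exists t, Rabs t <= 1 / (INR n + 1) /\ exists x, (INR n + 1) * norm x < norm (T t x)).
  { intros n. apply NNPP. intros Hn. apply H. exists (1 / (INR n + 1)), (INR n + 1). split.
    generalize (pos_INR n); intros; apply Rdiv_lt_0_compat; lra.
    intros t Ht x. apply Rnot_lt_le. intros Hlt. apply Hn. exists t. split; eauto. }
  set (tf := fun n => proj1_sig (constructive_indefinite_description _ (Hn n))).
  assert (Htf : forall n, Rabs (tf n) <= 1 / (INR n + 1) /\ exists x, (INR n + 1) * norm x < norm (T (tf n) x)).
  { intros n. apply (proj2_sig (constructive_indefinite_description _ (Hn n))). }
  destruct (UBP (fun n => T (tf n))) as [C HC]; auto.
  { intros; apply T_BL. }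
  { intros x. destruct (T_cont0 x 1) as [d [Hd Hd']]. lra.
    destruct (inv_small d Hd) as [N HN].
    exists (norm x + 1 + sum_f_R0 (fun i => norm (T (tf i) x)) N). intros n.
    assert (Hs := cond_pos_sum (fun i => norm (T (tf i) x)) N (fun k => norm_ge_0 _)).
    destruct (le_lt_dec n N) as [Hle|Hlt].
    - generalize (sum_f_R0_ge (fun i => norm (T (tf i) x)) N n (fun k => norm_ge_0 _) Hle). simpl.
      generalize (norm_ge_0 x). lra.
    - assert (Habs : Rabs (tf n) < d).
      { eapply Rle_lt_trans. apply Htf. eapply Rle_lt_trans. 2: apply HN.
        unfold Rdiv. rewrite !Rmult_1_l. apply Rinv_le_contravar. generalize (pos_INR N); lra.
        apply Rplus_le_compat_r. apply le_INR. lia. }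
      generalize (Hd' _ Habs) (norm_ge_minus (T (tf n) x) x). lra. }
  destruct (nat_larger C) as [n Hn']. destruct (Htf n) as [_ [x Hx]].
  generalize (HC n x) (norm_ge_0 x). intros H1 H2.
  assert (C * norm x <= INR n * norm x) by (apply Rmult_le_compat_r; lra). nra.
Qed.

Lemma T_iter u k x : T (INR k * u) x = Nat.iter k (T u) x.
Proof.
  induction k. simpl. rewrite Rmult_0_l. apply T_0.
  rewrite S_INR. replace ((INR k + 1) * u) with (u + INR k * u) by ring. rewrite T_add. rewrite IHk. reflexivity.
Qed.

Lemma T_local_bound : ncomplete X -> forall H, exists C, 1 <= C /\ forall t, Rabs t <= H -> forall x, norm (T t x) <= C * norm x.
Proof.
  intros Hcomp H. destruct (T_local_bound0 Hcomp) as [eta [M [Heta HM]]].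
  set (M' := Rmax M 1).
  assert (HM' : forall t, Rabs t <= eta -> forall x, norm (T t x) <= M' * norm x).
  { intros t Ht x. eapply Rle_trans. apply HM; auto. apply Rmult_le_compat_r. apply norm_ge_0. apply Rmax_l. }
  destruct (nat_larger (H / eta)) as [N HN].
  exists (M' ^ (S N)). split. apply pow_R1_Rle. apply Rmax_r.
  intros t Ht x. set (u := t / INR (S N)).
  assert (HSN : 0 < INR (S N)) by (apply lt_0_INR; lia).
  assert (Hu : Rabs u <= eta).
  { unfold u. unfold Rdiv. rewrite Rabs_mult. rewrite Rabs_inv. rewrite (Rabs_pos_eq (INR (S N))) by lra.
    apply Rmult_le_reg_r with (INR (S N)). lra. rewrite Rmult_assoc, Rinv_l, Rmult_1_r by lra.
    rewrite S_INR. apply Rle_trans with H. auto.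
    assert (H <= eta * INR N). 
    { assert (H = eta * (H / eta)) by (field; lra). rewrite H0. apply Rmult_le_compat_l; lra. }
    lra. }
  replace t with (INR (S N) * u) by (unfold u; field; lra).
  rewrite T_iter. clear Ht.
  assert (forall k, norm (Nat.iter k (T u) x) <= M' ^ k * norm x).
  { induction k. simpl. lra. simpl. eapply Rle_trans. apply HM'. auto. rewrite Rmult_assoc.
    apply Rmult_le_compat_l. unfold M'. generalize (Rmax_r M 1). lra. auto. }
  apply H0.
Qed.

End Grp.

Lemma rcont_lip (phi : R -> R) a : (forall y, Rabs (phi y - phi a) <= Rabs (y - a)) -> rcont phi a.
Proof. intros H eps He. exists eps. split; [assumption|]. intros y Hy. eapply Rle_lt_trans. apply H. auto. Qed.

Lemma rcont_id a : rcont (fun y => y) a.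
Proof. apply rcont_lip. intros; lra. Qed.
Lemma rcont_shift c a : rcont (fun y => y + c) a.
Proof. apply rcont_lip. intros. replace (y + c - (a + c)) with (y - a) by ring. lra. Qed.
Lemma rcont_nshift c a : rcont (fun y => c - y) a.
Proof. apply rcont_lip. intros. replace (c - y - (c - a)) with (- (y - a)) by ring. rewrite Rabs_Ropp. lra. Qed.
Definition clamp (a b y : R) := Rmax a (Rmin b y).
Lemma clamp_lip a b y z : Rabs (clamp a b y - clamp a b z) <= Rabs (y - z).
Proof.
  unfold clamp, Rmax, Rmin. repeat destruct Rle_dec; unfold Rabs; repeat destruct Rcase_abs; lra.
Qed.
Lemma rcont_clamp a b c : rcont (clamp a b) c.
Proof. apply rcont_lip. intros. apply clamp_lip. Qed.
Lemma clamp_in a b y : a <= y <= b -> clamp a b y = y.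
Proof. intros. unfold clamp, Rmax, Rmin. repeat destruct Rle_dec; lra. Qed.
Lemma clamp_range a b y : a <= b -> a <= clamp a b y <= b.
Proof. intros. unfold clamp, Rmax, Rmin. repeat destruct Rle_dec; lra. Qed.

Section NC2.
Context {X : NormedModule R_AbsRing}.

Lemma ncont_comp (g : R -> X) (phi : R -> R) a : rcont phi a -> ncont g (phi a) -> ncont (fun y => g (phi y)) a.
Proof.
  intros Hp Hg eps He. destruct (Hg eps He) as [d1 [Hd1 H1]]. destruct (Hp d1 Hd1) as [d2 [Hd2 H2]].
  exists d2. split; [exact Hd2|]. intros y Hy. apply H1. apply H2. exact Hy.
Qed.

Lemma ncont_const (c : X) a : ncont (fun _ => c) a.
Proof. intros eps He. exists 1. split; [lra|]. intros y _. rewrite nmdX. exact He. Qed.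

Lemma ncont_plus (f g : R -> X) a : ncont f a -> ncont g a -> ncont (fun y => plus (f y) (g y)) a.
Proof.
  intros Hf Hg eps He. destruct (Hf (eps/2)) as [d1 [Hd1 H1]]. lra. destruct (Hg (eps/2)) as [d2 [Hd2 H2]]. lra.
  exists (Rmin d1 d2). split. apply Rmin_pos; auto. intros y Hy.
  assert (E : minus (plus (f y) (g y)) (plus (f a) (g a)) = plus (minus (f y) (f a)) (minus (g y) (g a))).
  { apply mppX. }
  rewrite E. eapply Rle_lt_trans. apply norm_triangle.
  generalize (H1 y (Rlt_le_trans _ _ _ Hy (Rmin_l _ _))) (H2 y (Rlt_le_trans _ _ _ Hy (Rmin_r _ _))). lra.
Qed.

Lemma ncont_lipmap {Y : NormedModule R_AbsRing} (F : X -> Y) (L : R) (g : R -> X) a :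
  (forall u v, norm (minus (F u) (F v)) <= L * norm (minus u v)) -> ncont g a -> ncont (fun y => F (g y)) a.
Proof.
  intros HF Hg eps He. set (L' := Rmax L 1). assert (HL' : 1 <= L') by apply Rmax_r.
  destruct (Hg (eps / L')) as [d [Hd H]]. apply Rdiv_lt_0_compat; lra.
  exists d. split; [assumption|]. intros y Hy. eapply Rle_lt_trans. apply HF.
  apply Rle_lt_trans with (L' * norm (minus (g y) (g a))). apply Rmult_le_compat_r. apply norm_ge_0. apply Rmax_l.
  replace eps with (L' * (eps / L')) by (field; lra). apply Rmult_lt_compat_l. lra. auto.
Qed.
End NC2.

Section Grp2.
Context {X : NormedModule R_AbsRing} (T : R -> X -> X) (HT : C0_group T) (Hcomp : ncomplete X).

Lemma T_strong a x : ncont (fun t => T t x) a.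
Proof.
  intros eps He. destruct (BL_bound (T a) (T_BL T HT a)) as [C [HC HCb]].
  destruct (T_cont0 T HT x (eps / C)) as [d [Hd H]]. apply Rdiv_lt_0_compat; auto.
  exists d. split; [assumption|]. intros t Ht.
  replace t with (a + (t - a)) by ring. rewrite (T_add T HT). rewrite <- (T_minus T HT).
  eapply Rle_lt_trans. apply HCb. replace eps with (C * (eps / C)) by (field; lra).
  apply Rmult_lt_compat_l; [assumption|]. apply H. replace (a + (t - a) - a) with (t - a) by ring. exact Ht.
Qed.

Lemma T_joint (phi : R -> R) (g : R -> X) r0 : rcont phi r0 -> ncont g r0 -> ncont (fun r => T (phi r) (g r)) r0.
Proof.
  intros Hp Hg eps He.
  destruct (T_local_bound T HT Hcomp (Rabs (phi r0) + 1)) as [C [HC HCb]].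
  destruct (T_strong (phi r0) (g r0) (eps / 2)) as [d1 [Hd1 H1]]. lra.
  destruct (Hp (Rmin d1 1)) as [d2 [Hd2 H2]]. apply Rmin_pos; lra.
  destruct (Hg (eps / (2 * C))) as [d3 [Hd3 H3]]. apply Rdiv_lt_0_compat; lra.
  exists (Rmin d2 d3). split. apply Rmin_pos; auto. intros y Hy.
  assert (Hy2 : Rabs (phi y - phi r0) < Rmin d1 1) by (apply H2; eapply Rlt_le_trans; [exact Hy| apply Rmin_l]).
  assert (Hy3 : norm (minus (g y) (g r0)) < eps / (2 * C)) by (apply H3; eapply Rlt_le_trans; [exact Hy| apply Rmin_r]).
  eapply Rle_lt_trans. apply (norm_minus_tri _ (T (phi y) (g r0))).
  rewrite <- (T_minus T HT).
  assert (Hb : norm (T (phi y) (minus (g y) (g r0))) <= C * norm (minus (g y) (g r0))).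
  { apply HCb. generalize (Rmin_r d1 1) (Rabs_triang_inv (phi y) (phi r0)). lra. }
  assert (C * norm (minus (g y) (g r0)) <= eps / 2).
  { apply Rle_trans with (C * (eps / (2 * C))). apply Rmult_le_compat_l; lra. apply Req_le. field. lra. }
  generalize (H1 (phi y) (Rlt_le_trans _ _ _ Hy2 (Rmin_l _ _))). lra.
Qed.
End Grp2.

Lemma is_RInt_expk A k a s : 0 < k ->
  is_RInt (fun y => A * exp (k * (y - a))) a s (A / k * (exp (k * (s - a)) - 1)).
Proof.
  intros Hk.
  assert (H := is_RInt_derive (fun y => A / k * exp (k * (y - a))) (fun y => A * exp (k * (y - a))) a s).
  replace (A / k * (exp (k * (s - a)) - 1)) with (minus (A / k * exp (k * (s - a))) (A / k * exp (k * (a - a)))).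
  apply H.
  - intros x _. auto_derive. auto. unfold Rminus. field. lra.
  - intros x _. apply (ex_derive_continuous (K:=R_AbsRing) (V:=R_NormedModule)). auto_derive. auto.
  - unfold minus, plus, opp; simpl. replace (k * (a - a)) with 0 by ring. rewrite exp_0. ring.
Qed.

Lemma exp_le x y : x <= y -> exp x <= exp y.
Proof. intros [H|H]. left; apply exp_increasing; auto. subst; lra. Qed.

Lemma half_pow_mono n m : (n <= m)%nat -> (1/2)^m <= (1/2)^n.
Proof.
  intros H. induction H. lra. rewrite <- tech_pow_Rmult. generalize (pow_le (1/2) m). lra.
Qed.

Lemma half_pow_small eps : 0 < eps -> exists N, (1/2) ^ N < eps.
Proof.
  intros He. destruct (inv_small eps He) as [N HN]. exists N. eapply Rle_lt_trans. 2: exact HN.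
  clear HN. induction N. simpl. lra. rewrite S_INR. simpl.
  generalize (pos_INR N). intros HN.
  apply Rle_trans with (1/2 * (1 / (INR N + 1))). apply Rmult_le_compat_l; lra.
  unfold Rdiv. rewrite !Rmult_1_l. rewrite <- Rinv_mult. apply Rinv_le_contravar; nra.
Qed.

Section Lim.
Context {X : NormedModule R_AbsRing}.
Definition seq_lim (u : nat -> X) (l : X) := forall eps, 0 < eps -> exists N, forall n, (N <= n)%nat -> norm (minus (u n) l) < eps.

Lemma norm_small_eq (a b : X) : (forall eps, 0 < eps -> norm (minus a b) < eps) -> a = b.
Proof.
  intros H. assert (norm (minus a b) = 0).
  { destruct (norm_ge_0 (minus a b)) as [Hp|Hz]; auto. specialize (H _ Hp). lra. }
  apply norm_eq_zero in H0. apply mzeX. exact H0.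
Qed.

Lemma seq_lim_unique u l1 l2 : seq_lim u l1 -> seq_lim u l2 -> l1 = l2.
Proof.
  intros H1 H2. apply norm_small_eq. intros eps He.
  destruct (H1 (eps/2)) as [N1 HN1]. lra. destruct (H2 (eps/2)) as [N2 HN2]. lra.
  set (n := Nat.max N1 N2). eapply Rle_lt_trans. apply (norm_minus_tri _ (u n)).
  rewrite norm_minus_sym. generalize (HN1 n (Nat.le_max_l _ _)) (HN2 n (Nat.le_max_r _ _)). lra.
Qed.

Lemma continuous_ncont (f : R -> X) a : filterlim f (locally a) (locally (f a)) -> ncont f a.
Proof.
  intros H eps He. apply filterlim_locally_ball_norm with (eps := mkposreal eps He) in H.
  destruct (locally_R _ _ H) as [d [Hd Hd']]. exists d. split; [assumption|]. intros y Hy. apply (Hd' y Hy).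
Qed.

Definition Iv (g : R -> X) (a b : R) : X := epsilon (inhabits zero) (fun I => is_RInt g a b I).
Lemma Iv_spec g a b : (exists I, is_RInt g a b I) -> is_RInt g a b (Iv g a b).
Proof. intros H. unfold Iv. apply (epsilon_spec (inhabits zero) (fun I => is_RInt g a b I) H). Qed.

Lemma RInt_point_zero (g : R -> X) a I : is_RInt g a a I -> I = zero.
Proof.
  intros H. assert (H1 := norm_RInt_le_const g a a I (norm (g a)) (Rle_refl a)). 
  apply norm_eq_zero. apply Rle_antisym. 2: apply norm_ge_0.
  replace (((a - a) * norm (g a))) with 0 in H1 by ring. apply H1; auto.
  intros x Hx. replace x with a by lra. lra.
Qed.
End Lim.

Definition int_cont_ok (X : NormedModule R_AbsRing) := forall (f : R -> X) a b,
  (forall z, ncont f z) -> exists I, is_RInt f a b I.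
Definition int_unif_ok (X : NormedModule R_AbsRing) := forall (fn : nat -> R -> X) (f : R -> X) a b (In : nat -> X),
  (forall n, is_RInt (fn n) a b (In n)) ->
  (forall eps, 0 < eps -> exists N, forall n t, (N <= n)%nat -> norm (minus (fn n t) (f t)) < eps) ->
  exists I, is_RInt f a b I /\ seq_lim In I.

Section Picard.
Context {X : NormedModule R_AbsRing} (T : R -> X -> X) (HT : C0_group T) (Hcomp : ncomplete X)
  (Hic : int_cont_ok X) (Hiu : int_unif_ok X).

Lemma Iv_cont (h : R -> X) a : (forall z, ncont h z) -> forall s, ncont (fun s => Iv h a s) s.
Proof.
  intros Hh s. apply continuous_ncont. apply (continuous_RInt_1 h a s (fun s => Iv h a s)).
  apply filter_forall. intros z. apply Iv_spec. apply Hic. auto.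
Qed.

Lemma picard (F : X -> X) L : 0 < L -> (forall u v, norm (minus (F u) (F v)) <= L * norm (minus u v)) ->
  F zero = zero -> forall a b c, a < b -> exists W : R -> X, W a = c /\
  forall t, a <= t <= b -> is_RInt (fun r => T (- r) (F (T r (W r)))) a t (minus (W t) c).
Proof.
  intros HL HF HF0 a b c Hab.
  destruct (T_local_bound T HT Hcomp (Rabs a + Rabs b)) as [C [HC1 HCb]].
  set (kap := C * L * C). assert (Hk : 0 < kap) by (unfold kap; apply Rmult_lt_0_compat; [apply Rmult_lt_0_compat|]; lra).
  set (cl := clamp a b).
  assert (Hcl : forall r, a <= cl r <= b) by (intros; apply clamp_range; lra).
  assert (Hclabs : forall r, Rabs (cl r) <= Rabs a + Rabs b /\ Rabs (- cl r) <= Rabs a + Rabs b).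
  { intros r. rewrite Rabs_Ropp. destruct (Hcl r). split; unfold Rabs; repeat destruct Rcase_abs; lra. }
  set (G := fun r w => T (- cl r) (F (T (cl r) w))).
  assert (HGlip : forall r w w', norm (minus (G r w) (G r w')) <= kap * norm (minus w w')).
  { intros r w w'. unfold G. rewrite <- (T_minus T HT). eapply Rle_trans. apply HCb. apply Hclabs.
    unfold kap. rewrite !Rmult_assoc. apply Rmult_le_compat_l. lra. eapply Rle_trans. apply HF.
    apply Rmult_le_compat_l. lra. rewrite <- (T_minus T HT). apply HCb. apply Hclabs. }
  assert (HG0 : forall r, G r zero = zero).
  { intros r. unfold G. rewrite (BL_zero _ (T_BL T HT _)). rewrite HF0. apply (BL_zero _ (T_BL T HT _)). }
  assert (HGb : forall r w, norm (G r w) <= kap * norm w).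
  { intros r w. assert (E1 : minus (G r w) (G r zero) = G r w) by (rewrite HG0; apply mz0X).
    assert (E2 : minus w zero = w) by apply mz0X.
    generalize (HGlip r w zero). rewrite E1. rewrite mz0X'. auto. }
  assert (HGc : forall g, (forall z, ncont g z) -> forall z, ncont (fun r => G r (g r)) z).
  { intros g Hg z. unfold G. apply (T_joint T HT Hcomp (fun r => - cl r) (fun r => F (T (cl r) (g r)))).
    apply rcont_lip. intros y. replace (- cl y - - cl z) with (- (cl y - cl z)) by ring. rewrite Rabs_Ropp. apply clamp_lip.
    apply (ncont_lipmap F L). auto. apply (T_joint T HT Hcomp cl g). apply rcont_clamp. auto. }
  pose (Wn := fix Wn (n : nat) : R -> X := match n with O => fun _ => c
     | S n' => fun t => plus c (Iv (fun r => G r (Wn n' r)) a (cl t)) end).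
  assert (HWS : forall n t, Wn (S n) t = plus c (Iv (fun r => G r (Wn n r)) a (cl t))) by reflexivity.
  assert (HWc : forall n z, ncont (Wn n) z).
  { induction n; intros z. apply ncont_const. 
    apply (ncont_plus (fun _ => c) (fun t => Iv (fun r => G r (Wn n r)) a (cl t))). apply ncont_const.
    apply (ncont_comp (fun s => Iv (fun r => G r (Wn n r)) a s) cl). apply rcont_clamp. apply Iv_cont. apply HGc. auto. }
  assert (HI : forall n s, is_RInt (fun r => G r (Wn n r)) a s (Iv (fun r => G r (Wn n r)) a s)).
  { intros n s. apply Iv_spec. apply Hic. apply HGc. auto. }
  assert (Hbd : forall n t, norm (minus (Wn (S n) t) (Wn n t)) <= norm c * (1/2) ^ n * exp (2 * kap * (cl t - a))).
  { induction n; intros t.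
    - rewrite HWS. change (Wn 0%nat t) with c. rewrite mplX.
      assert (Ht := Hcl t).
      eapply Rle_trans. apply (norm_RInt_le_const (fun r => G r (Wn 0%nat r)) a (cl t) _ (kap * norm c)). lra.
      intros x _. apply HGb. apply HI.
      simpl. rewrite Rmult_1_r. generalize (exp_ineq1_le (2 * kap * (cl t - a))) (norm_ge_0 c). intros H1 H2.
      apply Rle_trans with (norm c * (kap * (cl t - a))). apply Req_le; ring. apply Rmult_le_compat_l. lra.
      assert (0 <= kap * (cl t - a)) by (apply Rmult_le_pos; lra). lra.
    - rewrite (HWS (S n)), (HWS n). rewrite mpcX. assert (Ht := Hcl t).
      assert (Hm := is_RInt_minus _ _ a (cl t) _ _ (HI (S n) (cl t)) (HI n (cl t))).
      eapply Rle_trans. apply (norm_RInt_le (fun r => minus (G r (Wn (S n) r)) (G r (Wn n r))) (fun r => kap * (norm c * (1/2)^n) * exp (2 * kap * (r - a))) a (cl t) _ _ (proj1 Ht)).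
      2: apply Hm. 2: apply is_RInt_expk; lra.
      + intros x Hx. eapply Rle_trans. apply HGlip. rewrite Rmult_assoc. apply Rmult_le_compat_l. lra.
        eapply Rle_trans. apply IHn. replace (cl x) with x by (unfold cl; rewrite clamp_in; lra). lra.
      + simpl. generalize (norm_ge_0 c) (pow_le (1/2) n) (exp_pos (2 * kap * (cl t - a))). intros H1 H2 H3.
        apply Rle_trans with (norm c * (1/2)^n * (exp (2 * kap * (cl t - a)) - 1) / 2). apply Req_le. field. lra.
        assert (0 <= norm c * (1/2)^n) by (apply Rmult_le_pos; lra).
        apply Rle_trans with (norm c * (1/2)^n * exp (2 * kap * (cl t - a)) / 2). 
        unfold Rdiv. apply Rmult_le_compat_r. lra. apply Rmult_le_compat_l. lra. lra.
        apply Req_le. field. }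
  set (E := exp (2 * kap * (b - a))).
  assert (HE : 0 < E) by apply exp_pos.
  assert (Hbd2 : forall n t, norm (minus (Wn (S n) t) (Wn n t)) <= norm c * E * (1/2) ^ n).
  { intros n t. eapply Rle_trans. apply Hbd.
    assert (exp (2 * kap * (cl t - a)) <= E) by (apply exp_le; generalize (Hcl t); nra).
    generalize (norm_ge_0 c) (pow_le (1/2) n). intros H1 H2.
    replace (norm c * E * (1/2)^n) with (norm c * (1/2)^n * E) by ring.
    apply Rmult_le_compat_l. apply Rmult_le_pos; lra. auto. }
  set (B := norm c * E). assert (HB : 0 <= B) by (unfold B; generalize (norm_ge_0 c); nra).
  assert (Hcd : forall n d t, norm (minus (Wn (n + d)%nat t) (Wn n t)) <= 2 * B * ((1/2)^n - (1/2)^(n+d))).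
  { intros n d t. induction d.
    - rewrite Nat.add_0_r. rewrite nmdX. lra.
    - replace (n + S d)%nat with (S (n + d)) by lia. eapply Rle_trans. apply (norm_minus_tri _ (Wn (n + d)%nat t)).
      generalize (Hbd2 (n + d)%nat t). unfold B in *. rewrite <- tech_pow_Rmult. intros. lra. }
  assert (Hcm : forall n m t, (n <= m)%nat -> norm (minus (Wn m t) (Wn n t)) <= 2 * B * (1/2)^n).
  { intros n m t Hnm. replace m with (n + (m - n))%nat by lia. eapply Rle_trans. apply Hcd.
    generalize (pow_le (1/2) (n + (m - n))). intros. nra. }
  assert (Hsmall : forall eps, 0 < eps -> exists N, 4 * B * (1/2)^N < eps).
  { intros eps He. destruct (half_pow_small (eps / (4 * B + 1))) as [N HN]. apply Rdiv_lt_0_compat; lra.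
    exists N. apply Rle_lt_trans with ((4 * B + 1) * (1/2)^N). generalize (pow_le (1/2) N); nra.
    apply Rmult_lt_reg_l with (/ (4 * B + 1)). apply Rinv_0_lt_compat; lra.
    rewrite <- Rmult_assoc, Rinv_l, Rmult_1_l by lra. unfold Rdiv in HN. lra. }
  assert (Hex : forall t, exists l, seq_lim (fun n => Wn n t) l).
  { intros t. apply Hcomp. intros eps He. destruct (Hsmall eps He) as [N HN]. exists N. intros n m Hn Hm.
    eapply Rle_lt_trans. apply (norm_minus_tri _ (Wn N t)). rewrite (norm_minus_sym (Wn N t)).
    generalize (Hcm N n t Hn) (Hcm N m t Hm). lra. }
  set (W := fun t => epsilon (inhabits zero) (fun l => seq_lim (fun n => Wn n t) l)).
  assert (HW : forall t, seq_lim (fun n => Wn n t) (W t)).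
  { intros t. apply (epsilon_spec (inhabits zero) (fun l => seq_lim (fun n => Wn n t) l) (Hex t)). }
  assert (Hunif : forall n t, norm (minus (Wn n t) (W t)) <= 2 * B * (1/2)^n).
  { intros n t. apply le_epsilon. intros eta Heta. destruct (HW t eta Heta) as [N HN].
    set (m := Nat.max n N). eapply Rle_trans. apply (norm_minus_tri _ (Wn m t)).
    rewrite (norm_minus_sym (Wn n t)). generalize (Hcm n m t (Nat.le_max_l _ _)) (HN m (Nat.le_max_r _ _)). lra. }
  exists W. split.
  - assert (Hc : forall n, Wn n a = c).
    { intros n. destruct n. reflexivity. rewrite HWS. replace (cl a) with a by (unfold cl; rewrite clamp_in; lra).
      rewrite (RInt_point_zero _ a _ (HI n a)). apply pz0X. }
    symmetry. apply (seq_lim_unique (fun n => Wn n a)). intros eps He. exists O. intros n _. rewrite Hc. rewrite nmdX. auto.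
    apply HW.
  - intros t Ht. 
    destruct (Hiu (fun n r => G r (Wn n r)) (fun r => G r (W r)) a t (fun n => Iv (fun r => G r (Wn n r)) a t)) as [I [HI1 HI2]].
    + intros n. apply HI.
    + intros eps He. destruct (Hsmall (eps / kap)) as [N HN]. apply Rdiv_lt_0_compat; lra.
      exists N. intros n r Hn. eapply Rle_lt_trans. apply HGlip. 
      apply Rle_lt_trans with (kap * (2 * B * (1/2)^n)). apply Rmult_le_compat_l. lra. apply Hunif.
      apply Rle_lt_trans with (kap * (4 * B * (1/2)^N)).
      apply Rmult_le_compat_l. lra. assert ((1/2)^n <= (1/2)^N) by (apply half_pow_mono; lia). 
      generalize (pow_le (1/2) n); nra.
      replace eps with (kap * (eps / kap)) by (field; lra). apply Rmult_lt_compat_l; lra.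
    + assert (HWt : W t = plus c I).
      { apply (seq_lim_unique (fun n => Wn (S n) t)).
        intros eps He. destruct (HW t eps He) as [N HN]. exists N. intros n Hn. apply HN. lia.
        intros eps He. destruct (HI2 eps He) as [N HN]. exists N. intros n Hn. rewrite HWS.
        replace (cl t) with t by (unfold cl; rewrite clamp_in; lra). rewrite mpcX. apply HN. auto. }
      rewrite HWt. rewrite mplX. apply (is_RInt_ext (fun r => G r (W r))). 2: auto.
      intros x Hx. unfold G. replace (cl x) with x. auto. unfold cl. rewrite clamp_in. auto.
      rewrite Rmin_left in Hx by lra. rewrite Rmax_right in Hx by lra. lra.
Qed.
End Picard.

Lemma incr_mono (ts : nat -> R) : (forall k, ts k < ts (S k)) -> forall i j, (i < j)%nat -> ts i < ts j.
Proof.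
  intros H i j Hij. induction Hij. apply H. eapply Rlt_trans. apply IHHij. apply H.
Qed.
Lemma incr_mono_le (ts : nat -> R) : (forall k, ts k < ts (S k)) -> forall i j, (i <= j)%nat -> ts i <= ts j.
Proof.
  intros H i j Hij. destruct (Nat.eq_dec i j). subst; lra. left. apply incr_mono; auto. lia.
Qed.
Lemma index_exists (ts : nat -> R) : increasing_unbounded_from0 ts -> forall t, 0 <= t -> exists k, ts k <= t < ts (S k).
Proof.
  intros [H0 [Hi Hu]] t Ht. destruct (Hu t) as [n Hn]. induction n.
  - lra.
  - destruct (Rlt_or_le t (ts n)) as [H|H]. auto. exists n. split; auto.
Qed.
Lemma index_unique (ts : nat -> R) : (forall k, ts k < ts (S k)) -> forall k j t,
  ts k <= t < ts (S k) -> ts j <= t < ts (S j) -> k = j.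
Proof.
  intros Hi k j t Hk Hj. destruct (lt_eq_lt_dec k j) as [[H|H]|H]; auto.
  - assert (ts (S k) <= ts j) by (apply incr_mono_le; auto). lra.
  - assert (ts (S j) <= ts k) by (apply incr_mono_le; auto). lra.
Qed.
Lemma index_left (ts : nat -> R) : increasing_unbounded_from0 ts -> forall b, 0 < b -> exists m, ts m < b <= ts (S m).
Proof.
  intros [H0 [Hi Hu]] b Hb. destruct (Hu b) as [n Hn]. induction n.
  - lra.
  - destruct (Rlt_or_le b (ts n)) as [H|H]. 
    + apply IHn. auto.
    + destruct H as [H|H]. exists n. split; lra.
      destruct n. lra. exists n. split. rewrite <- H. apply Hi. lra.
Qed.

Section Conv.
Context {X : NormedModule R_AbsRing} (T : R -> X -> X) (HT : C0_group T).

Lemma conv_back (g : R -> X) a t (J : X) : is_RInt (fun r => T (- r) (g r)) a t J ->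
  is_RInt (fun r => T (t - a - r) (g (a + r))) 0 (t - a) (T t J).
Proof.
  intros H. apply (is_RInt_BL (T t)) in H. 2: apply T_BL; auto.
  assert (H2 := is_RInt_comp_lin (fun r => T t (T (- r) (g r))) 1 a 0 (t - a) (T t J)).
  replace (1 * 0 + a) with a in H2 by ring. replace (1 * (t - a) + a) with t in H2 by ring.
  specialize (H2 H). apply (is_RInt_ext _ _ _ _ _ (fun x _ => eq_refl)) in H2.
  eapply is_RInt_ext. 2: exact H2. intros x _. simpl. rewrite s1X. rewrite <- (T_add T HT).
  replace (1 * x + a) with (a + x) by ring. f_equal. ring.
Qed.

Lemma conv_fwd (g : R -> X) a t (I : X) : is_RInt (fun r => T (t - a - r) (g (a + r))) 0 (t - a) I ->
  is_RInt (fun r => T (- r) (g r)) a t (T (- t) I).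
Proof.
  intros H. apply (is_RInt_BL (T (- t))) in H. 2: apply T_BL; auto.
  assert (H2 := is_RInt_comp_lin (fun r => T (- t) (T (t - a - r) (g (a + r)))) 1 (- a) a t (T (- t) I)).
  replace (1 * a + - a) with 0 in H2 by ring. replace (1 * t + - a) with (t - a) in H2 by ring.
  specialize (H2 H).
  eapply is_RInt_ext. 2: exact H2. intros x _. simpl. rewrite s1X. rewrite <- (T_add T HT).
  replace (a + (1 * x + - a)) with x by ring. f_equal. ring.
Qed.

Lemma conv_val a t (xa I : X) : T (- t) (plus (T (t - a) xa) I) = plus (T (- a) xa) (T (- t) I).
Proof.
  destruct (T_BL T HT (- t)) as [Ha _]. rewrite Ha. f_equal. rewrite <- (T_add T HT). f_equal. ring.
Qed.
End Conv.

Section Glue.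
Context {X U : NormedModule R_AbsRing} (T : R -> X -> X) (HT : C0_group T) (Hcomp : ncomplete X)
  (Hic : int_cont_ok X) (Hiu : int_unif_ok X) {Q : Type} (f : Q -> X -> U -> X) (K : X -> U) (Lf LK : R)
  (HLf : 0 < Lf)
  (Hf : forall q x u x' u', norm (minus (f q x u) (f q x' u')) <= Lf * (norm (minus x x') + norm (minus u u')))
  (Hf0 : forall q, f q zero zero = zero)
  (HK : forall x y, norm (minus (K x) (K y)) <= LK * norm (minus x y)) (HK0 : K zero = zero).

Lemma F_lip q : forall u v, norm (minus (f q u (K u)) (f q v (K v))) <= (Lf * (1 + Rmax LK 0)) * norm (minus u v).
Proof.
  intros u v. eapply Rle_trans. apply Hf. rewrite Rmult_assoc. apply Rmult_le_compat_l. lra.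
  generalize (HK u v) (Rmax_l LK 0) (norm_ge_0 (minus u v)). nra.
Qed.
Lemma F_zero q : f q zero (K zero) = zero.
Proof. rewrite HK0. apply Hf0. Qed.

Lemma sigma0_exists sigma x0 : PC sigma -> exists z, Sigma0_traj T f K sigma x0 z.
Proof.
  intros [ts [Hts Hconst]]. destruct Hts as [H0 [Hinc Hunb]].
  set (L := Lf * (1 + Rmax LK 0)). assert (HL : 0 < L) by (unfold L; generalize (Rmax_r LK 0); nra).
  set (P := fun (q : Q) (a b : R) (c : X) (W : R -> X) => W a = c /\
    forall t, a <= t <= b -> is_RInt (fun r => T (- r) (f q (T r (W r)) (K (T r (W r))))) a t (minus (W t) c)).
  assert (HP : forall q a b c, exists W, a < b -> P q a b c W).
  { intros q a b c. destruct (Rlt_or_le a b) as [Hab|Hab].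
    - destruct (picard T HT Hcomp Hic Hiu (fun x => f q x (K x)) L HL (F_lip q) (F_zero q) a b c Hab) as [W HW].
      exists W. intros _. exact HW.
    - exists (fun _ => c). intros; lra. }
  set (Sol := fun q a b c => epsilon (inhabits (fun _ : R => c)) (fun W => a < b -> P q a b c W)).
  assert (HSol : forall q a b c, a < b -> P q a b c (Sol q a b c)).
  { intros q a b c Hab. apply (epsilon_spec (inhabits (fun _ : R => c)) (fun W => a < b -> P q a b c W) (HP q a b c)). auto. }
  set (qq := fun k => sigma (ts k)).
  pose (cs := fix cs (k : nat) : X := match k with O => x0 | S k' => Sol (qq k') (ts k') (ts (S k')) (cs k') (ts (S k')) end).
  set (Sk := fun k => Sol (qq k) (ts k) (ts (S k)) (cs k)).
  assert (HSk : forall k, P (qq k) (ts k) (ts (S k)) (cs k) (Sk k)) by (intros; apply HSol; auto).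
  assert (Hcs : forall k, cs (S k) = Sk k (ts (S k))) by reflexivity.
  set (idx := fun t => epsilon (inhabits 0%nat) (fun k => ts k <= t < ts (S k))).
  assert (Hidx : forall t k, ts k <= t < ts (S k) -> idx t = k).
  { intros t k Hk. apply (index_unique ts Hinc _ _ t). 2: auto.
    apply (epsilon_spec (inhabits 0%nat) (fun k => ts k <= t < ts (S k))). exists k; auto. }
  set (z := fun t => T t (Sk (idx t) t)).
  assert (Hz : forall k r, ts k <= r <= ts (S k) -> z r = T r (Sk k r)).
  { intros k r Hr. unfold z. destruct (Rlt_or_le r (ts (S k))) as [Hlt|Hge].
    - rewrite (Hidx r k) by lra. auto.
    - assert (r = ts (S k)) by lra. subst r. rewrite (Hidx (ts (S k)) (S k)). 2: split; [lra|apply Hinc].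
      f_equal. rewrite (proj1 (HSk (S k))). symmetry. apply Hcs. }
  exists z. exists ts. split. split. split; auto. auto.
  split.
  - rewrite (Hz 0%nat 0). rewrite (T_0 T HT). rewrite <- H0. apply (proj1 (HSk 0%nat)). rewrite H0. split. lra. left; rewrite <- H0; apply Hinc.
  - intros k t Ht. exists (T t (minus (Sk k t) (cs k))). split.
    + assert (H1 := proj2 (HSk k) t Ht).
      apply (conv_back T HT (fun r => f (qq k) (T r (Sk k r)) (K (T r (Sk k r))))) in H1.
      eapply is_RInt_ext. 2: exact H1. intros r Hr. simpl.
      rewrite Rmin_left in Hr by lra. rewrite Rmax_right in Hr by lra.
      rewrite (Hz k (ts k + r)) by lra. reflexivity.
    + rewrite (Hz k t Ht). rewrite (Hz k (ts k)) by (split; [lra| left; apply Hinc]).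
      rewrite (proj1 (HSk k)). rewrite <- (T_add T HT). replace (t - ts k + ts k) with t by ring.
      destruct (T_BL T HT t) as [Ha _]. rewrite <- Ha. f_equal. symmetry. apply pmrX.
Qed.
End Glue.

Section Util.
Context {X : NormedModule R_AbsRing}.

Lemma is_RInt_uniq (g : R -> X) a b I1 I2 : is_RInt g a b I1 -> is_RInt g a b I2 -> I1 = I2.
Proof.
  intros H1 H2. assert (H := is_RInt_minus _ _ _ _ _ _ H1 H2).
  apply mzeX. apply norm_eq_zero. apply Rle_antisym. 2: apply norm_ge_0.
  assert (H3 := norm_RInt_le_const_abs _ _ _ _ 0 (fun x _ => Req_le _ _ (nmdX (g x))) H). lra.
Qed.

Lemma chasles' (g : R -> X) a b c l1 l2 l : is_RInt g a b l1 -> is_RInt g b c l2 -> plus l1 l2 = l -> is_RInt g a c l.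
Proof. intros H1 H2 E. rewrite <- E. apply (is_RInt_Chasles g a b c l1 l2 H1 H2). Qed.
Lemma RInt_minus' (g h : R -> X) a b l1 l2 l : is_RInt g a b l1 -> is_RInt h a b l2 -> minus l1 l2 = l ->
  is_RInt (fun r => minus (g r) (h r)) a b l.
Proof. intros H1 H2 E. rewrite <- E. apply (is_RInt_minus g h a b l1 l2 H1 H2). Qed.
Lemma RInt_swap' (g : R -> X) a b l l' : is_RInt g a b l -> opp l = l' -> is_RInt g b a l'.
Proof. intros H E. rewrite <- E. apply is_RInt_swap. auto. Qed.

Lemma left_lim_eq (F1 F2 : R -> X) b c : c < b -> (forall y, c <= y < b -> F1 y = F2 y) ->
  ncont F1 b -> ncont F2 b -> F1 b = F2 b.
Proof.
  intros Hcb Heq H1 H2. apply norm_small_eq. intros eps He.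
  destruct (H1 (eps/2)) as [d1 [Hd1 Hd1']]. lra. destruct (H2 (eps/2)) as [d2 [Hd2 Hd2']]. lra.
  set (y := Rmax c (b - Rmin d1 d2 / 2)).
  assert (Hy1 : c <= y < b).
  { assert (0 < Rmin d1 d2) by (apply Rmin_pos; auto). unfold y. split. apply Rmax_l. apply Rmax_lub_lt; lra. }
  assert (Hy2 : Rabs (y - b) < Rmin d1 d2).
  { assert (0 < Rmin d1 d2) by (apply Rmin_pos; auto). rewrite Rabs_left by lra. unfold y. generalize (Rmax_r c (b - Rmin d1 d2 / 2)). lra. }
  eapply Rle_lt_trans. apply (norm_minus_tri _ (F1 y)). rewrite (norm_minus_sym (F1 b) (F1 y)).
  generalize (Hd1' y (Rlt_le_trans _ _ _ Hy2 (Rmin_l _ _))) (Hd2' y (Rlt_le_trans _ _ _ Hy2 (Rmin_r _ _))). rewrite <- (Heq y Hy1). lra.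
Qed.

Lemma ncont_Rplus (x : R -> X) : continuous_on_Rplus x -> forall z, ncont (fun r => x (Rmax 0 r)) z.
Proof.
  intros Hx z eps He. destruct (Rlt_or_le z 0) as [Hz|Hz].
  - exists (- z). split. lra. intros y Hy. rewrite (Rmax_left 0 y), (Rmax_left 0 z) by (unfold Rabs in Hy; destruct Rcase_abs in Hy; lra).
    rewrite nmdX. auto.
  - specialize (Hx z Hz). apply filterlim_locally_ball_norm with (eps := mkposreal eps He) in Hx.
    destruct (locally_R _ _ Hx) as [d [Hd Hd']]. exists d. split; [assumption|]. intros y Hy.
    rewrite (Rmax_right 0 z) by lra. apply (Hd' (Rmax 0 y)). 
    + unfold Rmax; destruct Rle_dec. auto. unfold Rabs in *; repeat destruct Rcase_abs; lra.
    + apply Rmax_l.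
Qed.

Lemma lip2_ncont {Y Z : NormedModule R_AbsRing} (h : X -> Y -> Z) (L : R) (g1 : R -> X) (g2 : R -> Y) a :
  (forall u v u' v', norm (minus (h u v) (h u' v')) <= L * (norm (minus u u') + norm (minus v v'))) ->
  ncont g1 a -> ncont g2 a -> ncont (fun r => h (g1 r) (g2 r)) a.
Proof.
  intros Hh H1 H2 eps He. set (L' := Rmax L 1). assert (HL' : 1 <= L') by apply Rmax_r.
  destruct (H1 (eps / (2 * L'))) as [d1 [Hd1 Hd1']]. apply Rdiv_lt_0_compat; lra.
  destruct (H2 (eps / (2 * L'))) as [d2 [Hd2 Hd2']]. apply Rdiv_lt_0_compat; lra.
  exists (Rmin d1 d2). split. apply Rmin_pos; auto. intros y Hy.
  eapply Rle_lt_trans. apply Hh.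
  assert (A1 := Hd1' y (Rlt_le_trans _ _ _ Hy (Rmin_l _ _))). assert (A2 := Hd2' y (Rlt_le_trans _ _ _ Hy (Rmin_r _ _))).
  apply Rle_lt_trans with (L' * (norm (minus (g1 y) (g1 a)) + norm (minus (g2 y) (g2 a)))).
  apply Rmult_le_compat_r. generalize (norm_ge_0 (minus (g1 y) (g1 a))) (norm_ge_0 (minus (g2 y) (g2 a))). lra. apply Rmax_l.
  apply Rlt_le_trans with (L' * (eps / (2 * L') + eps / (2 * L'))). apply Rmult_lt_compat_l; lra.
  apply Req_le. field. lra.
Qed.
End Util.

Definition sidx (s : nat -> R) (t : R) : nat := epsilon (inhabits 0%nat) (fun k => s k <= t < s (S k)).
Lemma sidx_eq s t k : (forall j, s j < s (S j)) -> s k <= t < s (S k) -> sidx s t = k.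
Proof.
  intros Hi Hk. apply (index_unique s Hi _ _ t). 2: auto.
  apply (epsilon_spec (inhabits 0%nat) (fun k => s k <= t < s (S k))). exists k; auto.
Qed.
Lemma sidx_spec s t : increasing_unbounded_from0 s -> 0 <= t -> s (sidx s t) <= t < s (S (sidx s t)).
Proof.
  intros Hs Ht. apply (epsilon_spec (inhabits 0%nat) (fun k => s k <= t < s (S k))). apply index_exists; auto.
Qed.

Section VForm.
Context {X U : NormedModule R_AbsRing} (T : R -> X -> X) (HT : C0_group T) (Hcomp : ncomplete X)
  (Hic : int_cont_ok X) (Hiu : int_unif_ok X) {Q : Type} (f : Q -> X -> U -> X) (K : X -> U) (Lf LK : R)
  (HLf : 0 < Lf) (HLK : 0 <= LK)
  (Hf : forall q x u x' u', norm (minus (f q x u) (f q x' u')) <= Lf * (norm (minus x x') + norm (minus u u')))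
  (Hf0 : forall q, f q zero zero = zero)
  (HK : forall x y, norm (minus (K x) (K y)) <= LK * norm (minus x y)) (HK0 : K zero = zero).

Lemma is_RInt_point0 (g : R -> X) a (x : X) : is_RInt g a a (minus x x).
Proof. rewrite mdX. apply is_RInt_point. Qed.

Lemma sigma0_vform sigma x0 z : Sigma0_traj T f K sigma x0 z -> forall t, 0 <= t ->
  is_RInt (fun r => T (- r) (f (sigma r) (z r) (K (z r)))) 0 t (minus (T (- t) (z t)) x0).
Proof.
  intros [ts [[[H0 [Hinc Hunb]] Hconst] [Hz0 Hcl]]].
  set (G := fun r => T (- r) (f (sigma r) (z r) (K (z r)))).
  assert (Hk : forall k t, 0 <= t <= ts k -> is_RInt G 0 t (minus (T (- t) (z t)) x0)).
  { induction k; intros t Ht.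
    - rewrite H0 in Ht. replace t with 0 by lra. replace (-0) with 0 by ring. rewrite (T_0 T HT). rewrite Hz0.
      apply is_RInt_point0.
    - destruct (Rle_or_lt t (ts k)) as [Hle|Hlt]. apply IHk; lra.
      destruct (Hcl k t) as [I [HI Hxt]]. lra.
      assert (H2 := conv_fwd T HT (fun r => f (sigma (ts k)) (z r) (K (z r))) (ts k) t I HI).
      assert (H0k : 0 <= ts k) by (rewrite <- H0; apply incr_mono_le; auto; lia).
      assert (H3 : is_RInt G (ts k) t (T (- t) I)).
      { eapply is_RInt_ext. 2: exact H2. intros r Hr. rewrite Rmin_left in Hr by lra. rewrite Rmax_right in Hr by lra.
        unfold G. rewrite (Hconst k r). auto. lra. }
      apply (chasles' _ _ _ _ _ _ _ (IHk (ts k) (conj H0k (Rle_refl _))) H3).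
      rewrite Hxt. rewrite (conv_val T HT). apply pmaX. }
  intros t Ht. destruct (Hunb t) as [k Hkt]. apply (Hk k). lra.
Qed.

Definition Gs (s : nat -> R) (sigma : R -> Q) (x : R -> X) (r : R) : X :=
  f (sigma r) (x r) (K (T (r - s (sidx s r)) (x (s (sidx s r))))).

Lemma ncont_minus_const (g : R -> X) (c : X) a : ncont g a -> ncont (fun y => minus (g y) c) a.
Proof. intros H eps He. destruct (H eps He) as [d [Hd H']]. exists d. split; [assumption|]. intros y Hy. rewrite mmrX. auto. Qed.

Lemma sampled_vform s sigma x0 x : sampling_seq s -> PC sigma -> sampled_traj T f K s sigma x0 x ->
  forall t, 0 <= t -> is_RInt (fun r => T (- r) (Gs s sigma x r)) 0 t (minus (T (- t) (x t)) x0).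
Proof.
  intros Hs HPC [Hx0 [Hxc Hxf]]. destruct Hs as [Hs0 [Hsinc Hsunb]].
  destruct HPC as [ts [Hts Hconst]].
  set (V := fun t => T (- t) (x t)).
  set (GG := fun r => T (- r) (Gs s sigma x r)).
  assert (Hs0k : forall k, 0 <= s k) by (intros; rewrite <- Hs0; apply incr_mono_le; auto; lia).
  assert (Hstep : forall k t, s k <= t < s (S k) -> is_RInt GG (s k) t (minus (V t) (V (s k)))).
  { intros k t Ht. destruct (Hxf k t Ht) as [I [HI Hxt]].
    set (g := fun r => f (sigma r) (x r) (K (T (r - s k) (x (s k))))).
    assert (HI' : is_RInt (fun r => T (t - s k - r) (g (s k + r))) 0 (t - s k) I).
    { eapply is_RInt_ext. 2: exact HI. intros r _. unfold g. rewrite (Rplus_comm r (s k)).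
      replace (s k + r - s k) with r by ring. reflexivity. }
    assert (H2 := conv_fwd T HT g (s k) t I HI').
    assert (E : minus (V t) (V (s k)) = T (- t) I).
    { unfold V. rewrite Hxt. rewrite (conv_val T HT). apply mplX. }
    rewrite E. eapply is_RInt_ext. 2: exact H2. intros r Hr. 
    destruct (Req_dec (s k) t) as [Heq|Hne]. rewrite Heq in Hr. rewrite Rmin_left, Rmax_left in Hr by lra. lra.
    rewrite Rmin_left in Hr by lra. rewrite Rmax_right in Hr by lra.
    unfold GG, Gs, g. rewrite (sidx_eq s r k Hsinc). reflexivity. lra. }
  assert (Hk : forall k t, 0 <= t <= s k -> is_RInt GG 0 t (minus (V t) x0)).
  { induction k; intros t Ht.
    - rewrite Hs0 in Ht. replace t with 0 by lra. unfold V. replace (-0) with 0 by ring. rewrite (T_0 T HT). rewrite Hx0.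
      apply is_RInt_point0.
    - assert (Hopen : forall t, 0 <= t < s (S k) -> is_RInt GG 0 t (minus (V t) x0)).
      { intros t' Ht'. destruct (Rle_or_lt t' (s k)) as [Hle|Hlt]. apply IHk; lra.
        apply (chasles' _ _ _ _ _ _ _ (IHk (s k) (conj (Hs0k k) (Rle_refl _))) (Hstep k t' (conj (Rlt_le _ _ Hlt) (proj2 Ht')))).
        apply pmcX. }
      destruct (Rlt_or_le t (s (S k))) as [Hlt|Hge]. apply Hopen; lra.
      assert (Htb : t = s (S k)) by lra. clear Hge. subst t. set (b := s (S k)). assert (Hbdef : b = s (S k)) by reflexivity.
      assert (Hb : 0 < b) by (unfold b; generalize (Hs0k k) (Hsinc k); lra).
      destruct (index_left ts Hts b Hb) as [m [Hm1 Hm2]].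
      set (c := Rmax (s k) (ts m)).
      assert (Hc1 : s k <= c) by apply Rmax_l. assert (Hc2 : c < b) by (apply Rmax_lub_lt; [apply Hsinc|auto]).
      assert (Hsig : forall r, c <= r < b -> sigma r = sigma (ts m)).
      { intros r Hr. unfold c in Hr. apply Hconst. split. generalize (Rmax_r (s k) (ts m)); lra. lra. }
      set (xc := fun r => x (Rmax 0 r)).
      assert (Hxcc : forall z, ncont xc z) by (apply ncont_Rplus; auto).
      set (ht := fun r => T (- r) (f (sigma (ts m)) (xc r) (K (T (r - s k) (x (s k)))))).
      assert (Hhtc : forall z, ncont ht z).
      { intros z. unfold ht. apply (T_joint T HT Hcomp (fun r => - r) (fun r => f (sigma (ts m)) (xc r) (K (T (r - s k) (x (s k)))))).
        apply rcont_lip. intros y. replace (- y - - z) with (- (y - z)) by ring. rewrite Rabs_Ropp. lra.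
        apply (lip2_ncont (f (sigma (ts m))) Lf). intros; apply Hf. apply Hxcc.
        apply (ncont_lipmap K LK). auto. apply (T_joint T HT Hcomp (fun r => r - s k) (fun _ => x (s k))).
        apply rcont_shift. apply ncont_const. }
      set (Psi := fun z => Iv ht c z).
      assert (HPsi : forall z, is_RInt ht c z (Psi z)) by (intros; apply Iv_spec; apply Hic; auto).
      assert (HPsic : ncont Psi b) by (apply (Iv_cont Hic); auto).
      assert (Hmid : forall y, c <= y < b -> is_RInt ht c y (minus (V y) (V c))).
      { intros y Hy. 
        assert (H1 := Hstep k y (conj (Rle_trans _ _ _ Hc1 (proj1 Hy)) (proj2 Hy))).
        assert (H2 := Hstep k c (conj Hc1 Hc2)).
        assert (H3 := chasles' _ _ _ _ _ _ _ (RInt_swap' _ _ _ _ _ H2 eq_refl) H1 (pom2X _ _ _)).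
        eapply is_RInt_ext. 2: exact H3. intros r Hr.
        assert (Hr' : c <= r < b).
        { destruct (Req_dec c y) as [Heq|Hne]. rewrite Heq in Hr. rewrite Rmin_left, Rmax_left in Hr by lra. lra.
          rewrite Rmin_left in Hr by lra. rewrite Rmax_right in Hr by lra. lra. }
        unfold GG, ht, Gs, xc. rewrite (sidx_eq s r k Hsinc) by lra. rewrite (Hsig r) by lra.
        rewrite Rmax_right by (generalize (Hs0k k); lra). reflexivity. }
      assert (HF1 : ncont (fun y => minus (T (- y) (xc y)) (V c)) b).
      { apply ncont_minus_const. apply (T_joint T HT Hcomp (fun r => - r) xc). 
        apply rcont_lip. intros y. replace (- y - - b) with (- (y - b)) by ring. rewrite Rabs_Ropp. lra. auto. }
      assert (Heqb := left_lim_eq (fun y => minus (T (- y) (xc y)) (V c)) Psi b c Hc2).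
      assert (HPb : minus (V b) (V c) = Psi b).
      { assert (Exb : xc b = x b) by (unfold xc; rewrite Rmax_right by lra; auto).
        unfold V at 1. rewrite <- Exb. apply Heqb; auto.
        intros y Hy. apply (is_RInt_uniq ht c y). 2: apply HPsi.
        replace (T (- y) (xc y)) with (V y). apply Hmid; auto. unfold V, xc. rewrite Rmax_right by (generalize (Hs0k k); lra). auto. }
      apply (chasles' GG 0 c b (minus (V c) x0) (minus (V b) (V c)) (minus (V b) x0) (Hopen c (conj (Rle_trans _ _ _ (Hs0k k) Hc1) Hc2))).
      2: apply pmcX.
      rewrite HPb. eapply is_RInt_ext. 2: apply HPsi. intros r Hr.
      rewrite Rmin_left in Hr by lra. rewrite Rmax_right in Hr by lra.
      unfold GG, ht, Gs, xc. rewrite (sidx_eq s r k Hsinc) by lra. rewrite (Hsig r) by lra.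
      rewrite (Rmax_right 0 r) by (generalize (Hs0k k); lra). reflexivity. }
  intros t Ht. destruct (Hsunb t) as [k Hkt]. apply (Hk k). lra.
Qed.
End VForm.

Lemma gronwall (phi : R -> R) (H kap a P : R) : 0 < kap -> 0 <= a ->
  (forall t, 0 <= t <= H -> phi t <= P) ->
  (forall A, 0 <= A -> (forall r, 0 <= r <= H -> phi r <= A * exp (2 * kap * r)) ->
     forall t, 0 <= t <= H -> phi t <= a + A * (exp (2 * kap * t) - 1) / 2) ->
  forall t, 0 <= t <= H -> phi t <= a * exp (2 * kap * t).
Proof.
  intros Hk Ha HP Hstep. set (P' := Rmax P 0). assert (HP' : 0 <= P') by apply Rmax_r.
  assert (Hn : forall n t, 0 <= t <= H -> phi t <= (a + P' * (1/2)^n) * exp (2 * kap * t)).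
  { induction n; intros t Ht.
    - simpl. assert (1 <= exp (2 * kap * t)) by (generalize (exp_ineq1_le (2 * kap * t)); nra).
      apply Rle_trans with P'. eapply Rle_trans. apply HP; auto. apply Rmax_l. nra.
    - assert (HA : 0 <= a + P' * (1/2)^n) by (generalize (pow_le (1/2) n); nra).
      eapply Rle_trans. apply (Hstep _ HA IHn t Ht).
      assert (1 <= exp (2 * kap * t)) by (generalize (exp_ineq1_le (2 * kap * t)); nra).
      rewrite <- tech_pow_Rmult. generalize (pow_le (1/2) n). nra. }
  intros t Ht. apply le_epsilon. intros eps He.
  set (E := exp (2 * kap * t)). assert (HE : 0 < E) by apply exp_pos.
  destruct (half_pow_small (eps / (P' * E + 1))) as [N HN]. apply Rdiv_lt_0_compat; nra.
  generalize (Hn N t Ht). fold E. intros H1.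
  assert (P' * E * (1/2)^N <= eps).
  { apply Rle_trans with ((P' * E + 1) * (1/2)^N). generalize (pow_le (1/2) N); nra.
    apply Rlt_le. apply Rmult_lt_reg_l with (/ (P' * E + 1)). apply Rinv_0_lt_compat; nra.
    rewrite <- Rmult_assoc, Rinv_l, Rmult_1_l by nra. unfold Rdiv in HN. lra. }
  nra.
Qed.

Section KeyH.
Context {X U : NormedModule R_AbsRing} {Q : Type} (f : Q -> X -> U -> X) (K : X -> U) (Lf LK : R)
  (Hf : forall q x u x' u', norm (minus (f q x u) (f q x' u')) <= Lf * (norm (minus x x') + norm (minus u u')))
  (Hf0 : forall q, f q zero zero = zero)
  (HK : forall x y, norm (minus (K x) (K y)) <= LK * norm (minus x y)) (HK0 : K zero = zero).

Lemma f_bound q u v : norm (f q u v) <= Lf * (norm u + norm v).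
Proof.
  generalize (Hf q u v zero zero). rewrite Hf0. rewrite !mz0X'. auto.
Qed.
Lemma K_bound u : norm (K u) <= LK * norm u.
Proof.
  generalize (HK u zero). rewrite HK0. rewrite !mz0X'. auto.
Qed.
End KeyH.

Section Key.
Context {X U : NormedModule R_AbsRing} (T : R -> X -> X) (HT : C0_group T) (Hcomp : ncomplete X)
  (Hic : int_cont_ok X) (Hiu : int_unif_ok X) {Q : Type} (f : Q -> X -> U -> X) (K : X -> U) (Lf LK : R)
  (HLf : 0 < Lf) (HLK : 0 <= LK)
  (Hf : forall q x u x' u', norm (minus (f q x u) (f q x' u')) <= Lf * (norm (minus x x') + norm (minus u u')))
  (Hf0 : forall q, f q zero zero = zero)
  (HK : forall x y, norm (minus (K x) (K y)) <= LK * norm (minus x y)) (HK0 : K zero = zero)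
  (M lam : R) (HM : 0 < M) (Hlam : 0 < lam)
  (HU : forall sigma x0 z, PC sigma -> Sigma0_traj T f K sigma x0 z -> forall t, 0 <= t -> norm (z t) <= M * exp (- lam * t) * norm x0).

Lemma key : exists tau C0 ds, 0 < tau /\ 1 <= C0 /\ 0 < ds /\ ds <= 1 /\
  forall s sigma x0 x delta, sampling_seq s -> delta <= ds -> (forall k, s (S k) - s k <= delta) -> PC sigma ->
  sampled_traj T f K s sigma x0 x ->
  (forall t, 0 <= t <= tau + 1 -> norm (x t) <= C0 * norm x0) /\
  (forall t, tau <= t <= tau + 1 -> norm (x t) <= / 2 * norm x0).
Proof.
  set (tau := ln (4 * M + 1) / lam).
  assert (Htau : 0 < tau).
  { unfold tau. apply Rdiv_lt_0_compat; auto. rewrite <- ln_1. apply ln_increasing; lra. }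
  set (H := tau + 1). assert (HH : H = tau + 1) by reflexivity.
  destruct (T_local_bound T HT Hcomp H) as [C [HC1 HCb]].
  set (kap := C * C * Lf * (1 + LK * C)).
  assert (Hk : 0 < kap).
  { unfold kap. assert (0 <= LK * C) by nra. assert (0 < C * C) by nra. assert (0 < C * C * Lf) by nra. nra. }
  set (E := exp (2 * kap * H)).
  assert (HE : 1 <= E) by (unfold E; generalize (exp_ineq1_le (2 * kap * H)); assert (0 <= 2 * kap * H) by (unfold H; nra); lra).
  set (C0 := C * E). assert (HC0 : 1 <= C0) by (unfold C0; nra).
  set (c1 := C * Lf * (C0 + LK * C * C0)).
  assert (Hc1 : 0 <= c1) by (unfold c1; assert (0 <= LK * C * C0) by (apply Rmult_le_pos; nra); assert (0 <= C * Lf) by nra; nra).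
  set (c2 := C * (H * (C * Lf * LK * c1)) * E).
  assert (Hc2 : 0 <= c2).
  { unfold c2. assert (0 <= C * Lf) by nra. assert (0 <= C * Lf * LK) by nra. assert (0 <= C * Lf * LK * c1) by nra.
    assert (0 <= H) by (unfold H; lra). apply Rmult_le_pos; [|lra]. apply Rmult_le_pos; [lra|]. nra. }
  exists tau, C0, (Rmin 1 (/ (4 * (c2 + 1)))). split; [auto|split; [auto|split; [|split]]].
  { apply Rmin_pos. lra. apply Rinv_0_lt_compat. lra. }
  { apply Rmin_l. }
  intros s sigma x0 x delta Hs Hd Hgap HPC Htraj.
  assert (Hs' := Hs). destruct Hs' as [Hs0 [Hsinc Hsunb]].
  assert (Hdpos : 0 < delta) by (generalize (Hgap 0%nat) (Hsinc 0%nat); lra).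
  assert (Hd1 : delta <= 1) by (eapply Rle_trans; [exact Hd| apply Rmin_l]).
  assert (Hdc2 : delta * c2 <= / 4).
  { assert (delta <= / (4 * (c2 + 1))) by (eapply Rle_trans; [exact Hd| apply Rmin_r]).
    apply Rle_trans with (/ (4 * (c2 + 1)) * c2). apply Rmult_le_compat_r; lra.
    apply Rmult_le_reg_l with (4 * (c2 + 1)). lra. rewrite <- Rmult_assoc, Rinv_r by lra. nra. }
  assert (Hs0k : forall k, 0 <= s k) by (intros; rewrite <- Hs0; apply incr_mono_le; auto; lia).
  assert (Hsj : forall r, 0 <= r -> s (sidx s r) <= r < s (S (sidx s r)) /\ r - s (sidx s r) <= delta).
  { intros r Hr. destruct (sidx_spec s r Hs Hr) as [H1 H2]. split. split; auto. generalize (Hgap (sidx s r)). lra. }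
  assert (HTH : forall t y, Rabs t <= H -> norm (T t y) <= C * norm y) by (intros; apply HCb; auto).
  assert (HabsH : forall t, 0 <= t <= H -> Rabs t <= H /\ Rabs (- t) <= H).
  { intros t Ht. rewrite Rabs_Ropp. rewrite Rabs_pos_eq by lra. lra. }
  set (V := fun t => T (- t) (x t)).
  assert (HxV : forall t, x t = T t (V t)) by (intros; unfold V; symmetry; apply (T_inv T HT)).
  assert (HxVb : forall t, 0 <= t <= H -> norm (x t) <= C * norm (V t)).
  { intros t Ht. rewrite HxV. apply HTH. apply HabsH; auto. }
  assert (HVxb : forall t, 0 <= t <= H -> norm (V t) <= C * norm (x t)).
  { intros t Ht. unfold V. apply HTH. apply HabsH; auto. }
  assert (Hvx := sampled_vform T HT Hcomp Hic f K Lf LK Hf HK s sigma x0 x Hs HPC Htraj).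
  assert (Hxc := proj1 (proj2 Htraj)).
  destruct (bounded_continuity (fun r => x (Rmax 0 r)) 0 H) as [P0 HP0].
  { intros r _. apply (ncont_continuous (fun r => x (Rmax 0 r))). apply ncont_Rplus. auto. }
  assert (HP0' : forall t, 0 <= t <= H -> norm (x t) <= P0).
  { intros t Ht. generalize (HP0 t Ht). rewrite Rmax_right by lra. lra. }
  assert (HGx : forall t, 0 <= t <= H -> norm (V t) <= norm x0 * exp (2 * kap * t)).
  { apply (gronwall (fun t => norm (V t)) H kap (norm x0) (C * P0) Hk (norm_ge_0 _)).
    - intros t Ht. eapply Rle_trans. apply HVxb; auto. apply Rmult_le_compat_l. lra. auto.
    - intros A HA Hb t Ht.
      assert (Hint := is_RInt_expk (kap * A) (2 * kap) 0 t). 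
      assert (Hn : norm (minus (V t) x0) <= kap * A / (2 * kap) * (exp (2 * kap * (t - 0)) - 1)).
      { apply (norm_RInt_le (fun r => T (- r) (Gs T f K s sigma x r)) (fun y => kap * A * exp (2 * kap * (y - 0))) 0 t).
        lra. 2: apply Hvx; lra. 2: apply Hint; lra.
        intros r Hr. assert (Hr' : 0 <= r <= H) by lra. rewrite Rminus_0_r.
        destruct (Hsj r (proj1 Hr)) as [[Hj1 Hj2] Hj3]. set (j := sidx s r) in *.
        set (e := exp (2 * kap * r)). assert (He : 0 < e) by apply exp_pos.
        assert (hT : norm (T (- r) (Gs T f K s sigma x r)) <= C * norm (Gs T f K s sigma x r)) by (apply HTH; apply HabsH; auto).
        assert (hf : norm (Gs T f K s sigma x r) <= Lf * (norm (x r) + norm (K (T (r - s j) (x (s j)))))) by (apply (f_bound f Lf Hf Hf0)).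
        assert (hK : norm (K (T (r - s j) (x (s j)))) <= LK * (C * norm (x (s j)))).
        { eapply Rle_trans. apply (K_bound K LK HK HK0). apply Rmult_le_compat_l. auto. apply HTH.
          rewrite Rabs_pos_eq by lra. lra. }
        assert (h1 : norm (x r) <= C * (A * e)).
        { eapply Rle_trans. apply HxVb; auto. apply Rmult_le_compat_l. lra. apply Hb; auto. }
        assert (h2 : norm (x (s j)) <= C * (A * e)).
        { eapply Rle_trans. apply HxVb. split; [apply Hs0k|lra]. apply Rmult_le_compat_l. lra.
          eapply Rle_trans. apply Hb. split; [apply Hs0k|lra]. apply Rmult_le_compat_l. auto. apply exp_le. nra. }
        assert (h3 : LK * (C * norm (x (s j))) <= LK * (C * (C * (A * e)))).
        { apply Rmult_le_compat_l. auto. apply Rmult_le_compat_l. lra. auto. }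
        assert (h4 : norm (Gs T f K s sigma x r) <= Lf * (C * (A * e) + LK * (C * (C * (A * e))))).
        { eapply Rle_trans. apply hf. apply Rmult_le_compat_l. lra. lra. }
        eapply Rle_trans. apply hT. apply Rle_trans with (C * (Lf * (C * (A * e) + LK * (C * (C * (A * e)))))).
        apply Rmult_le_compat_l. lra. auto. apply Req_le. unfold kap. ring. }
      generalize (norm_ge_minus (V t) x0). rewrite Rminus_0_r in Hn.
      replace (kap * A / (2 * kap)) with (A / 2) in Hn by (field; lra). lra. }
  assert (HxC0 : forall t, 0 <= t <= H -> norm (x t) <= C0 * norm x0).
  { intros t Ht. eapply Rle_trans. apply HxVb; auto. unfold C0. rewrite Rmult_assoc. apply Rmult_le_compat_l. lra.
    eapply Rle_trans. apply HGx; auto. rewrite (Rmult_comm E). apply Rmult_le_compat_l. apply norm_ge_0.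
    unfold E. apply exp_le. nra. }
  assert (Hpred : forall r, 0 <= r <= H ->
     norm (minus (x r) (T (r - s (sidx s r)) (x (s (sidx s r))))) <= delta * (c1 * norm x0)).
  { intros r Hr. destruct (Hsj r (proj1 Hr)) as [[Hj1 Hj2] Hj3]. set (j := sidx s r) in *.
    destruct (proj2 (proj2 Htraj) j r (conj Hj1 Hj2)) as [I [HI Hxr]].
    rewrite Hxr. rewrite mplX.
    eapply Rle_trans. apply (norm_RInt_le_const (fun rho => T (r - s j - rho) (f (sigma (rho + s j)) (x (rho + s j)) (K (T rho (x (s j)))))) 0 (r - s j) I (c1 * norm x0)). lra. 2: exact HI.
    - intros rho Hrho. assert (Habs1 : Rabs (r - s j - rho) <= H) by (rewrite Rabs_pos_eq; lra).
      assert (Habs2 : Rabs rho <= H) by (rewrite Rabs_pos_eq; lra).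
      eapply Rle_trans. apply HTH; auto. 
      assert (h1 : norm (x (rho + s j)) <= C0 * norm x0) by (apply HxC0; generalize (Hs0k j); lra).
      assert (h2 : norm (x (s j)) <= C0 * norm x0) by (apply HxC0; generalize (Hs0k j); lra).
      assert (h3 : norm (K (T rho (x (s j)))) <= LK * (C * (C0 * norm x0))).
      { eapply Rle_trans. apply (K_bound K LK HK HK0). apply Rmult_le_compat_l. auto.
        eapply Rle_trans. apply HTH; auto. apply Rmult_le_compat_l; lra. }
      assert (h4 : norm (f (sigma (rho + s j)) (x (rho + s j)) (K (T rho (x (s j))))) <= Lf * (C0 * norm x0 + LK * (C * (C0 * norm x0)))).
      { eapply Rle_trans. apply (f_bound f Lf Hf Hf0). apply Rmult_le_compat_l; lra. }
      apply Rle_trans with (C * (Lf * (C0 * norm x0 + LK * (C * (C0 * norm x0))))). apply Rmult_le_compat_l; lra.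
      apply Req_le. unfold c1. ring.
    - apply Rmult_le_compat_r. generalize (norm_ge_0 x0). nra. lra. }
  (* comparison trajectory *)
  destruct (sigma0_exists T HT Hcomp Hic Hiu f K Lf LK HLf Hf Hf0 HK HK0 sigma x0 HPC) as [z Hz].
  assert (Hzb : forall t, 0 <= t -> norm (z t) <= M * exp (- lam * t) * norm x0) by (intros t Ht; apply (HU sigma x0 z HPC Hz t Ht)).
  assert (HzM : forall t, 0 <= t -> norm (z t) <= M * norm x0).
  { intros t Ht. eapply Rle_trans. apply Hzb; auto. apply Rmult_le_compat_r. apply norm_ge_0.
    rewrite <- (Rmult_1_r M) at 2. apply Rmult_le_compat_l. lra. rewrite <- exp_0. apply exp_le. nra. }
  set (Vz := fun t => T (- t) (z t)).
  assert (Hvz := sigma0_vform T HT f K sigma x0 z Hz).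
  set (ee := fun t => minus (V t) (Vz t)).
  assert (Hve : forall t, 0 <= t -> is_RInt (fun r => minus (T (- r) (Gs T f K s sigma x r)) (T (- r) (f (sigma r) (z r) (K (z r))))) 0 t (ee t)).
  { intros t Ht. apply (RInt_minus' _ _ _ _ _ _ _ (Hvx t Ht) (Hvz t Ht)). unfold ee. apply mmrX. }
  assert (Hxz : forall t, 0 <= t <= H -> norm (minus (x t) (z t)) <= C * norm (ee t)).
  { intros t Ht. rewrite HxV. replace (z t) with (T t (Vz t)) by (unfold Vz; apply (T_inv T HT)).
    rewrite <- (T_minus T HT). apply HTH. apply HabsH; auto. }
  set (a' := C * Lf * LK * delta * c1 * norm x0).
  assert (Ha' : 0 <= a').
  { unfold a'. generalize (norm_ge_0 x0). intros. assert (0 <= C * Lf) by nra. assert (0 <= C * Lf * LK) by nra.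
    assert (0 <= C * Lf * LK * delta) by nra. assert (0 <= C * Lf * LK * delta * c1) by nra. nra. }
  assert (HGe : forall t, 0 <= t <= H -> norm (ee t) <= (H * a') * exp (2 * kap * t)).
  { apply (gronwall (fun t => norm (ee t)) H kap (H * a') (C * (C0 + M) * norm x0) Hk).
    apply Rmult_le_pos; lra.
    - intros t Ht. unfold ee. eapply Rle_trans. apply norm_minus_le.
      assert (norm (V t) <= C * (C0 * norm x0)). { eapply Rle_trans. apply HVxb; auto. apply Rmult_le_compat_l; [lra|]. apply HxC0; auto. }
      assert (norm (Vz t) <= C * (M * norm x0)). { unfold Vz. eapply Rle_trans. apply HTH. apply HabsH; auto. apply Rmult_le_compat_l; [lra|]. apply HzM; lra. }
      lra.
    - intros A HA Hb t Ht.
      assert (Hint1 := is_RInt_expk (kap * A) (2 * kap) 0 t).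
      assert (Hg : is_RInt (fun r => kap * A * exp (2 * kap * (r - 0)) + a') 0 t
                     (kap * A / (2 * kap) * (exp (2 * kap * (t - 0)) - 1) + (t - 0) * a')).
      { apply (is_RInt_plus (fun r => kap * A * exp (2 * kap * (r - 0))) (fun _ => a') 0 t). apply Hint1; lra. exact (is_RInt_const (V:=R_NormedModule) 0 t a'). }
      assert (Hn : norm (ee t) <= kap * A / (2 * kap) * (exp (2 * kap * (t - 0)) - 1) + (t - 0) * a').
      { apply (norm_RInt_le (fun r => minus (T (- r) (Gs T f K s sigma x r)) (T (- r) (f (sigma r) (z r) (K (z r))))) (fun r => kap * A * exp (2 * kap * (r - 0)) + a') 0 t _ _ (proj1 Ht)). 2: apply Hve; lra. 2: exact Hg.
        intros r Hr. assert (Hr' : 0 <= r <= H) by lra. rewrite Rminus_0_r.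
        destruct (Hsj r (proj1 Hr)) as [[Hj1 Hj2] Hj3].
        set (e := exp (2 * kap * r)). assert (He : 0 < e) by apply exp_pos.
        rewrite <- (T_minus T HT). eapply Rle_trans. apply HTH. apply HabsH; auto.
        unfold Gs. set (j := sidx s r) in *.
        assert (h1 : norm (minus (x r) (z r)) <= C * (A * e)).
        { eapply Rle_trans. apply Hxz; auto. apply Rmult_le_compat_l. lra. apply Hb; auto. }
        assert (h2 : norm (minus (T (r - s j) (x (s j))) (z r)) <= delta * (c1 * norm x0) + C * (A * e)).
        { eapply Rle_trans. apply (norm_minus_tri _ (x r)). rewrite norm_minus_sym. generalize (Hpred r Hr'). fold j. lra. }
        assert (h3 : norm (minus (K (T (r - s j) (x (s j)))) (K (z r))) <= LK * (delta * (c1 * norm x0) + C * (A * e))).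
        { eapply Rle_trans. apply HK. apply Rmult_le_compat_l; auto. }
        assert (h4 : norm (minus (f (sigma r) (x r) (K (T (r - s j) (x (s j))))) (f (sigma r) (z r) (K (z r))))
                     <= Lf * (C * (A * e) + LK * (delta * (c1 * norm x0) + C * (A * e)))).
        { eapply Rle_trans. apply Hf. apply Rmult_le_compat_l. lra. lra. }
        apply Rle_trans with (C * (Lf * (C * (A * e) + LK * (delta * (c1 * norm x0) + C * (A * e))))).
        apply Rmult_le_compat_l. lra. auto.
        assert (HAe : 0 <= A * e) by nra.
        assert (0 <= C * C * Lf * A * e * LK * (C - 1)).
        { assert (0 <= C * C) by nra. assert (0 <= C * C * Lf) by nra. assert (0 <= C * C * Lf * A) by nra.
          assert (0 <= C * C * Lf * A * e) by nra. assert (0 <= C * C * Lf * A * e * LK) by nra. nra. }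
        unfold kap, a'. nra. }
      rewrite Rminus_0_r in Hn. replace (kap * A / (2 * kap)) with (A / 2) in Hn by (field; lra).
      assert (t * a' <= H * a') by (apply Rmult_le_compat_r; lra). lra. }
  split.
  - intros t Ht. apply HxC0. lra.
  - intros t Ht. assert (Ht' : 0 <= t <= H) by lra.
    generalize (norm_ge_minus (x t) (z t)). intros Htri.
    assert (Hz1 : norm (z t) <= M * exp (- lam * tau) * norm x0).
    { eapply Rle_trans. apply Hzb. lra. apply Rmult_le_compat_r. apply norm_ge_0. apply Rmult_le_compat_l. lra.
      apply exp_le. nra. }
    assert (Htau' : exp (- lam * tau) = / (4 * M + 1)).
    { unfold tau. replace (- lam * (ln (4 * M + 1) / lam)) with (- ln (4 * M + 1)) by (field; lra).
      rewrite exp_Ropp. rewrite exp_ln by lra. auto. }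
    rewrite Htau' in Hz1.
    assert (HM4 : M * / (4 * M + 1) <= / 4).
    { apply Rmult_le_reg_r with (4 * M + 1). lra. rewrite Rmult_assoc, Rinv_l, Rmult_1_r by lra. lra. }
    assert (Hd2 : norm (minus (x t) (z t)) <= delta * c2 * norm x0).
    { eapply Rle_trans. apply Hxz; auto. apply Rle_trans with (C * ((H * a') * E)).
      apply Rmult_le_compat_l. lra. eapply Rle_trans. apply HGe; auto. apply Rmult_le_compat_l.
      apply Rmult_le_pos; lra. unfold E. apply exp_le. nra.
      apply Req_le. unfold c2, a'. ring. }
    assert (norm x0 * (M * / (4 * M + 1)) <= norm x0 * / 4) by (apply Rmult_le_compat_l; [apply norm_ge_0|auto]).
    assert (norm x0 * (delta * c2) <= norm x0 * / 4) by (apply Rmult_le_compat_l; [apply norm_ge_0|auto]).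
    nra.
Qed.
End Key.

Lemma PC_shift {Q : Type} (sigma : R -> Q) a : PC sigma -> 0 <= a -> PC (fun r => sigma (r + a)).
Proof.
  intros [ts [[H0 [Hinc Hunb]] Hconst]] Ha.
  destruct (index_exists ts (conj H0 (conj Hinc Hunb)) a Ha) as [m [Hm1 Hm2]].
  set (ts' := fun i => match i with O => 0 | S i' => ts (m + S i')%nat - a end).
  exists ts'. split. split; [|split].
  - reflexivity.
  - intros i. destruct i; simpl. replace (m + 1)%nat with (S m) by lia. lra.
    replace (m + S (S i))%nat with (S (m + S i)) by lia. generalize (Hinc (m + S i)%nat). lra.
  - intros B. destruct (Hunb (B + a)) as [k Hk]. exists (S k). simpl.
    assert (ts k <= ts (m + S k)%nat) by (apply incr_mono_le; auto; lia). lra.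
  - intros i t Ht. destruct i; simpl in *.
    + rewrite Rplus_0_l. rewrite (Hconst m (t + a)). rewrite (Hconst m a). auto. lra.
      replace (m + 1)%nat with (S m) in Ht by lia. lra.
    + rewrite (Hconst (m + S i)%nat (t + a)). replace (ts (m + S i)%nat - a + a) with (ts (m + S i)%nat) by ring. auto.
      replace (m + S (S i))%nat with (S (m + S i)) in Ht by lia. lra.
Qed.

Lemma sampling_shift s k : sampling_seq s -> sampling_seq (fun i => s (k + i)%nat - s k).
Proof.
  intros [H0 [Hinc Hunb]]. split; [|split].
  - simpl. rewrite Nat.add_0_r. ring.
  - intros i. simpl. replace (k + S i)%nat with (S (k + i)) by lia. generalize (Hinc (k + i)%nat). lra.
  - intros B. destruct (Hunb (B + s k)) as [n Hn]. exists n. assert (s n <= s (k + n)%nat) by (apply incr_mono_le; auto; lia). lra.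
Qed.

Section Shift.
Context {X U : NormedModule R_AbsRing} (T : R -> X -> X) {Q : Type} (f : Q -> X -> U -> X) (K : X -> U).

Lemma sampled_shift s sigma x0 x k : sampling_seq s -> sampled_traj T f K s sigma x0 x ->
  sampled_traj T f K (fun i => s (k + i)%nat - s k) (fun r => sigma (r + s k)) (x (s k)) (fun t => x (t + s k)).
Proof.
  intros [H0 [Hinc Hunb]] [Hx0 [Hxc Hxf]].
  assert (Hs0k : 0 <= s k) by (rewrite <- H0; apply incr_mono_le; auto; lia).
  split; [|split].
  - simpl. rewrite Rplus_0_l. reflexivity.
  - intros t Ht. specialize (Hxc (t + s k) ltac:(lra)).
    apply (proj2 (filterlim_locally_ball_norm _ _)). intros eps.
    apply filterlim_locally_ball_norm with (eps := eps) in Hxc.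
    destruct (locally_R _ _ Hxc) as [d [Hd Hd']]. apply (locally_R_intro t _ d Hd).
    intros y Hy Hy0. apply Hd'. replace (y + s k - (t + s k)) with (y - t) by ring. auto. simpl. lra.
  - intros i t Ht. replace (k + S i)%nat with (S (k + i)) in Ht by lia.
    destruct (Hxf (k + i)%nat (t + s k)) as [I [HI Hxt]]. lra.
    exists I. split.
    + replace (t - (s (k + i)%nat - s k)) with (t + s k - s (k + i)%nat) by ring.
      eapply is_RInt_ext. 2: exact HI. intros r _. 
      replace (t + s k - s (k + i)%nat - r) with (t + s k - s (k + i)%nat - r) by ring.
      replace (r + (s (k + i)%nat - s k) + s k) with (r + s (k + i)%nat) by ring.
      replace (s (k + i)%nat - s k + s k) with (s (k + i)%nat) by ring. reflexivity.
    + replace (t - (s (k + i)%nat - s k)) with (t + s k - s (k + i)%nat) by ring.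
      replace (s (k + i)%nat - s k + s k) with (s (k + i)%nat) by ring. exact Hxt.
Qed.
End Shift.

Lemma main_nm {X U : NormedModule R_AbsRing} (T : R -> X -> X) (Q : Type) (f : Q -> X -> U -> X) (K : X -> U) (Lf : R) :
  ncomplete X -> int_cont_ok X -> int_unif_ok X ->
  C0_group T -> 0 < Lf ->
  (forall q x u x' u', norm (minus (f q x u) (f q x' u')) <= Lf * (norm (minus x x') + norm (minus u u'))) ->
  (forall q, f q zero zero = zero) -> globally_lipschitz K -> K zero = zero ->
  UGES (Sigma0_traj T f K) ->
  exists dstar : R, 0 < dstar /\
    forall s : nat -> R, sampling_seq s ->
      (exists delta : R, delta < dstar /\ forall k, s (S k) - s k <= delta) ->
      UGES (sampled_traj T f K s).
Proof.
  intros Hcomp Hic Hiu HT HLf Hf Hf0 [LK0 HK0'] HK0 [M [lam [HM [Hlam HU]]]].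
  set (LK := Rmax LK0 0). assert (HLK : 0 <= LK) by apply Rmax_r.
  assert (HK : forall x y, norm (minus (K x) (K y)) <= LK * norm (minus x y)).
  { intros x y. eapply Rle_trans. apply HK0'. apply Rmult_le_compat_r. apply norm_ge_0. apply Rmax_l. }
  destruct (key T HT Hcomp Hic Hiu f K Lf LK HLf HLK Hf Hf0 HK HK0 M lam HM Hlam HU) as [tau [C0 [ds [Htau [HC0 [Hds [Hds1 Hkey]]]]]]].
  exists ds. split; auto. intros s Hs [delta [Hdelta Hgap]].
  set (lam' := ln 2 / (tau + 1)).
  assert (Hln2 : 0 < ln 2) by (rewrite <- ln_1; apply ln_increasing; lra).
  assert (Hlam' : 0 < lam') by (unfold lam'; apply Rdiv_lt_0_compat; lra).
  assert (Hclaim : forall n s sigma x0 x, sampling_seq s -> (forall k, s (S k) - s k <= delta) -> PC sigma ->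
     sampled_traj T f K s sigma x0 x -> forall t, 0 <= t <= INR n * tau ->
     norm (x t) <= 2 * C0 * exp (- lam' * t) * norm x0).
  { induction n; intros s' sigma x0 x Hs' Hgap' HPC Htr t Ht.
    - simpl in Ht. replace t with 0 by lra. rewrite (proj1 Htr). rewrite Rmult_0_r, exp_0.
      generalize (norm_ge_0 x0). nra.
    - destruct (Rle_or_lt t (tau + 1)) as [Hle|Hgt].
      + destruct (Hkey s' sigma x0 x delta Hs' (Rlt_le _ _ Hdelta) Hgap' HPC Htr) as [H1 _].
        eapply Rle_trans. apply H1. lra.
        assert (exp (- lam' * t) >= / 2).
        { rewrite <- (exp_ln 2) by lra. rewrite <- exp_Ropp. apply Rle_ge. apply exp_le.
          assert (lam' * t <= ln 2).
          { unfold lam'. apply Rle_trans with (ln 2 / (tau + 1) * (tau + 1)). apply Rmult_le_compat_l. apply Rlt_le, Rdiv_lt_0_compat; lra. lra.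
            apply Req_le. field. lra. }
          lra. }
        apply Rmult_le_compat_r. apply norm_ge_0. nra.
      + destruct Hs' as [Hs0 [Hsinc Hsunb]].
        destruct (index_left s' (conj Hs0 (conj Hsinc Hsunb)) tau Htau) as [m [Hm1 Hm2]].
        set (j := S m).
        assert (Hsj1 : tau <= s' j) by auto.
        assert (Hsj2 : s' j <= tau + 1) by (generalize (Hgap' m); unfold j; lra).
        destruct (Hkey s' sigma x0 x delta (conj Hs0 (conj Hsinc Hsunb)) (Rlt_le _ _ Hdelta) Hgap' HPC Htr) as [_ H2].
        assert (Hxj : norm (x (s' j)) <= / 2 * norm x0) by (apply H2; lra).
        assert (Hs0j : 0 <= s' j) by lra.
        assert (IH := IHn (fun i => s' (j + i)%nat - s' j) (fun r => sigma (r + s' j)) (x (s' j)) (fun u => x (u + s' j))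
                  (sampling_shift s' j (conj Hs0 (conj Hsinc Hsunb)))).
        specialize (IH ltac:(intros k; cbv beta; replace (j + S k)%nat with (S (j + k)) by lia; generalize (Hgap' (j + k)%nat); lra)).
        specialize (IH (PC_shift sigma (s' j) HPC Hs0j)).
        specialize (IH (sampled_shift T f K s' sigma x0 x j (conj Hs0 (conj Hsinc Hsunb)) Htr)).
        specialize (IH (t - s' j)). simpl in IH.
        replace (t - s' j + s' j) with t in IH by ring.
        assert (Hn : 0 <= t - s' j <= INR n * tau) by (rewrite S_INR in Ht; lra).
        specialize (IH Hn). eapply Rle_trans. apply IH.
        assert (Hexp : exp (- lam' * (t - s' j)) = exp (- lam' * t) * exp (lam' * s' j)).
        { rewrite <- exp_plus. f_equal. ring. }
        rewrite Hexp.
        assert (exp (lam' * s' j) <= 2).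
        { rewrite <- (exp_ln 2) by lra. apply exp_le. unfold lam'.
          apply Rle_trans with (ln 2 / (tau + 1) * (tau + 1)). apply Rmult_le_compat_l. apply Rlt_le, Rdiv_lt_0_compat; lra. lra.
          apply Req_le. field. lra. }
        assert (0 <= 2 * C0 * exp (- lam' * t)) by (generalize (exp_pos (- lam' * t)); nra).
        assert (0 <= exp (lam' * s' j)) by (apply Rlt_le, exp_pos).
        generalize (norm_ge_0 (x (s' j))) (norm_ge_0 x0). intros.
        replace (2 * C0 * (exp (- lam' * t) * exp (lam' * s' j)) * norm (x (s' j))) with
          (2 * C0 * exp (- lam' * t) * (exp (lam' * s' j) * norm (x (s' j)))) by ring.
        apply Rmult_le_compat_l. auto.
        assert (exp (lam' * s' j) * norm (x (s' j)) <= 2 * norm (x (s' j))) by (apply Rmult_le_compat_r; lra).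
        lra. }
  exists (2 * C0), lam'. split. lra. split. auto.
  intros sigma x0 x HPC Htr t Ht.
  destruct (nat_larger (t / tau)) as [n Hn].
  apply (Hclaim n s sigma x0 x Hs Hgap HPC Htr). split. auto.
  apply Rlt_le. apply Rmult_lt_reg_r with (/ tau). apply Rinv_0_lt_compat; auto.
  rewrite Rmult_assoc, Rinv_r, Rmult_1_r by lra. auto.
Qed.

Section Compl.
Context {X : CompleteNormedModule R_AbsRing}.

Lemma ncomplete_C : ncomplete X.
Proof.
  intros u Hu.
  set (F := filtermap u eventually).
  assert (FF : ProperFilter F) by (apply filtermap_proper_filter; apply eventually_filter).
  assert (Hc : cauchy F).
  { intros eps. destruct (Hu eps (cond_pos eps)) as [N HN]. exists (u N).
    exists N. intros n Hn. apply norm_compat1. apply HN; auto. }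
  exists (lim F). intros eps He.
  set (nf := @norm_factor R_AbsRing X).
  assert (Hnf : 0 < nf) by apply norm_factor_gt_0.
  assert (He' : 0 < eps / nf) by (apply Rdiv_lt_0_compat; auto).
  destruct (complete_cauchy F FF Hc (mkposreal _ He')) as [N HN].
  exists N. intros n Hn. specialize (HN n Hn). apply (@norm_compat2 R_AbsRing (CompleteNormedModule.NormedModule _ X)) in HN. simpl in HN.
  replace eps with (nf * (eps / nf)). exact HN.
  field. lra.
Qed.

Lemma int_cont_C : int_cont_ok X.
Proof.
  intros g a b Hg. apply ex_RInt_continuous. intros z _. apply (ncont_continuous (X := CompleteNormedModule.NormedModule _ X) g z). auto.
Qed.

Lemma int_unif_C : int_unif_ok X.
Proof.
  intros fn g a b In HI Hu.
  destruct (filterlim_RInt fn a b eventually eventually_filter g In HI) as [I [H1 H2]].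
  - intros P [eps HP]. destruct (Hu eps (cond_pos eps)) as [N HN]. exists N. intros n Hn. apply HP.
    intros t. apply (@norm_compat1 R_AbsRing (CompleteNormedModule.NormedModule _ X)). apply HN; auto.
  - exists I. split; auto. intros eps He.
    apply filterlim_locally_ball_norm with (eps := mkposreal eps He) in H1.
    destruct H1 as [N HN]. exists N. intros n Hn. apply (HN n Hn).
Qed.
End Compl.

Theorem corollary2 (X U : CompleteNormedModule R_AbsRing) (T : R -> X -> X)
  (Q : Type) (f : Q -> X -> U -> X) (K : X -> U) (Lf : R) :
  C0_group T ->
  inhabited Q ->
  0 < Lf ->
  (forall q x u x' u',
     norm (minus (f q x u) (f q x' u')) <= Lf * (norm (minus x x') + norm (minus u u'))) ->
  (forall q, f q zero zero = zero) ->
  globally_lipschitz K ->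
  K zero = zero ->
  UGES (Sigma0_traj T f K) ->
  exists dstar : R, 0 < dstar /\
    forall s : nat -> R, sampling_seq s ->
      (exists delta : R, delta < dstar /\ forall k, s (S k) - s k <= delta) ->
      UGES (sampled_traj T f K s).
Proof.
  intros HT _ HLf Hf Hf0 HK HK0 HU.
  apply (main_nm T Q f K Lf ncomplete_C int_cont_C int_unif_C HT HLf Hf Hf0 HK HK0 HU).
Qed.
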